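(* Let $G\in\mathbb C^{N\times N}$ be Hermitian positive definite, let $A\in\mathbb C^{N\times N}$ satisfy $GA=A^*G$, and let $B\in\mathbb C^{N\times N}$ satisfy $GB=B^*G\ge0$. Let $C_A,C_B$ be constants with $\|A\|_G\le C_A$ and $\|B\|_G\le C_B$. Suppose that for some $\alpha>0$ there exists $\beta>0$ with $$GB+\frac1{\alpha^2}A^*GBA\ge\beta G.$$ Then there exists $\delta>0$, depending only on $\alpha,\beta,C_A,C_B$, such that $$\lim_{T\to\infty}\frac1{2T}\int_{-T}^Te^{itA^*}GBe^{-itA}\,dt\ge\delta G$$ (the limit exists).
   Context: For Hermitian matrices $M_1,M_2$, $M_1\ge M_2$ means $M_1-M_2$ is positive semidefinite. $\|M\|_G$ denotes the operator norm of $M$ with respect to the norm $v\mapsto(v^*Gv)^{1/2}$ on $\mathbb C^N$. *)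

(* Defs.v *)
(* classical reals, complex numbers as pairs of reals,
   N x N complex matrices as functions nat -> nat -> C (only indices < N matter). *)
From Stdlib Require Import Reals Lra List Arith ClassicalEpsilon.
Open Scope R_scope.

Record C := mkC { re : R ; im : R }.
Definition C0 : C := mkC 0 0.
Definition C1 : C := mkC 1 0.
Definition Ci : C := mkC 0 1.
Definition Cadd (x y : C) : C := mkC (re x + re y) (im x + im y).
Definition Copp (x : C) : C := mkC (- re x) (- im x).
Definition Cmul (x y : C) : C :=
  mkC (re x * re y - im x * im y) (re x * im y + im x * re y).
Definition Cconj (x : C) : C := mkC (re x) (- im x).
Definition RtoC (r : R) : C := mkC r 0.

Definition csum (n : nat) (f : nat -> C) : C :=
  fold_right Cadd C0 (map f (seq 0 n)).

Definition Mat := nat -> nat -> C.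
Definition Vec := nat -> C.

Definition madd (M1 M2 : Mat) : Mat := fun i j => Cadd (M1 i j) (M2 i j).
Definition msub (M1 M2 : Mat) : Mat := fun i j => Cadd (M1 i j) (Copp (M2 i j)).
Definition mscale (c : C) (M : Mat) : Mat := fun i j => Cmul c (M i j).
Definition mmul (N : nat) (M1 M2 : Mat) : Mat :=
  fun i j => csum N (fun k => Cmul (M1 i k) (M2 k j)).
Definition madj (M : Mat) : Mat := fun i j => Cconj (M j i).
Definition mid : Mat := fun i j => if Nat.eqb i j then C1 else C0.
Definition mvec (N : nat) (M : Mat) (v : Vec) : Vec :=
  fun i => csum N (fun k => Cmul (M i k) (v k)).

Definition meq (N : nat) (M1 M2 : Mat) : Prop :=
  forall i j, (i < N)%nat -> (j < N)%nat -> M1 i j = M2 i j.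

Definition hermitian (N : nat) (M : Mat) : Prop := meq N M (madj M).

Definition quad (N : nat) (M : Mat) (v : Vec) : C :=
  csum N (fun i => Cmul (Cconj (v i)) (mvec N M v i)).

Definition psd (N : nat) (M : Mat) : Prop :=
  hermitian N M /\ forall v : Vec, 0 <= re (quad N M v).

Definition hpd (N : nat) (M : Mat) : Prop :=
  hermitian N M /\
  forall v : Vec, (exists i, (i < N)%nat /\ v i <> C0) -> 0 < re (quad N M v).

Definition mge (N : nat) (M1 M2 : Mat) : Prop := psd N (msub M1 M2).

Definition Gnormv (N : nat) (G : Mat) (v : Vec) : R := sqrt (re (quad N G v)).

(* ||M||_G <= c, i.e. the operator norm wrt the G-norm (a supremum) is <= c *)
Definition Gopnorm_le (N : nat) (G M : Mat) (c : R) : Prop :=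
  forall v : Vec, Gnormv N G (mvec N M v) <= c * Gnormv N G v.

Fixpoint mpow (N : nat) (M : Mat) (k : nat) : Mat :=
  match k with
  | O => mid
  | S k' => mmul N M (mpow N M k')
  end.

Fixpoint mexp_partial (N : nat) (M : Mat) (n : nat) : Mat :=
  match n with
  | O => mid
  | S n' => madd (mexp_partial N M n')
                 (mscale (RtoC (/ INR (Factorial.fact (S n')))) (mpow N M (S n')))
  end.

Definition Rlim (u : nat -> R) : R := epsilon (inhabits 0) (fun l => Un_cv u l).

Definition mexp (N : nat) (M : Mat) : Mat :=
  fun i j => mkC (Rlim (fun n => re (mexp_partial N M n i j)))
                 (Rlim (fun n => im (mexp_partial N M n i j))).

Definition Rint (g : R -> R) (a b : R) : R :=
  epsilon (inhabits 0) (fun I => exists pr : Riemann_integrable g a b, RiemannInt pr = I).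

Definition integrand (N : nat) (G A B : Mat) (t : R) : Mat :=
  mmul N (mexp N (mscale (mkC 0 t) (madj A)))
         (mmul N (mmul N G B) (mexp N (mscale (mkC 0 (- t)) A))).

Definition time_average_is (N : nat) (F : R -> Mat) (L : Mat) : Prop :=
  (forall T, 0 < T -> forall i j, (i < N)%nat -> (j < N)%nat ->
     inhabited (Riemann_integrable (fun t => re (F t i j)) (- T) T) /\
     inhabited (Riemann_integrable (fun t => im (F t i j)) (- T) T)) /\
  (forall eps, 0 < eps -> exists T0, 0 < T0 /\ forall T, T0 <= T ->
     forall i j, (i < N)%nat -> (j < N)%nat ->
       Rabs (Rint (fun t => re (F t i j)) (- T) T / (2 * T) - re (L i j)) < eps /\
       Rabs (Rint (fun t => im (F t i j)) (- T) T / (2 * T) - im (L i j)) < eps).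

(* Main.v *)
Require Import Defs.
From Stdlib Require Import Reals Lra Lia List Arith ZArith ClassicalEpsilon Classical Rtopology RiemannInt MVT FunctionalExtensionality.
Import Defs.
Open Scope R_scope.


Lemma Ceq (x y : C) : re x = re y -> im x = im y -> x = y.
Proof. destruct x, y; simpl; intros; subst; reflexivity. Qed.

Ltac cunf := unfold Cadd, Cmul, Copp, Cconj, RtoC, C0, C1, Ci in *.
Ltac cring := apply Ceq; cunf; simpl; ring.

Lemma Cadd_0_l x : Cadd C0 x = x. Proof. cring. Qed.
Lemma Cadd_0_r x : Cadd x C0 = x. Proof. cring. Qed.
Lemma Cadd_comm x y : Cadd x y = Cadd y x. Proof. cring. Qed.
Lemma Cadd_assoc x y z : Cadd x (Cadd y z) = Cadd (Cadd x y) z. Proof. cring. Qed.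
Lemma Cmul_comm x y : Cmul x y = Cmul y x. Proof. cring. Qed.
Lemma Cmul_assoc x y z : Cmul x (Cmul y z) = Cmul (Cmul x y) z. Proof. cring. Qed.
Lemma Cmul_0_l x : Cmul C0 x = C0. Proof. cring. Qed.
Lemma Cmul_0_r x : Cmul x C0 = C0. Proof. cring. Qed.
Lemma Cmul_1_l x : Cmul C1 x = x. Proof. cring. Qed.
Lemma Cmul_1_r x : Cmul x C1 = x. Proof. cring. Qed.
Lemma Cmul_add_l x y z : Cmul (Cadd x y) z = Cadd (Cmul x z) (Cmul y z). Proof. cring. Qed.
Lemma Cmul_add_r x y z : Cmul z (Cadd x y) = Cadd (Cmul z x) (Cmul z y). Proof. cring. Qed.
Lemma Cconj_add x y : Cconj (Cadd x y) = Cadd (Cconj x) (Cconj y). Proof. cring. Qed.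
Lemma Cconj_mul x y : Cconj (Cmul x y) = Cmul (Cconj x) (Cconj y). Proof. cring. Qed.
Lemma Cconj_conj x : Cconj (Cconj x) = x. Proof. cring. Qed.
Lemma Cconj_0 : Cconj C0 = C0. Proof. cring. Qed.

Lemma csum_0 f : csum 0 f = C0. Proof. reflexivity. Qed.

Lemma fold_add_app (l1 l2 : list C) :
  fold_right Cadd C0 (l1 ++ l2) = Cadd (fold_right Cadd C0 l1) (fold_right Cadd C0 l2).
Proof.
  induction l1; simpl. - now rewrite Cadd_0_l.
  - rewrite IHl1. apply Cadd_assoc.
Qed.

Lemma csum_S n f : csum (S n) f = Cadd (csum n f) (f n).
Proof.
  unfold csum. rewrite seq_S, map_app, fold_add_app. simpl. now rewrite Cadd_0_r.
Qed.

Lemma csum_ext n f g : (forall k, (k < n)%nat -> f k = g k) -> csum n f = csum n g.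
Proof.
  induction n; intros H; [reflexivity|]. rewrite !csum_S, IHn, H; auto; intros; apply H; lia.
Qed.

Lemma csum_add n f g : csum n (fun k => Cadd (f k) (g k)) = Cadd (csum n f) (csum n g).
Proof.
  induction n; [cring|]. rewrite !csum_S, IHn. cring.
Qed.

Lemma csum_mull n c f : Cmul c (csum n f) = csum n (fun k => Cmul c (f k)).
Proof. induction n; [cring|]. rewrite !csum_S, <- IHn. cring. Qed.

Lemma csum_mulr n c f : Cmul (csum n f) c = csum n (fun k => Cmul (f k) c).
Proof. induction n; [cring|]. rewrite !csum_S, <- IHn. cring. Qed.

Lemma csum_conj n f : Cconj (csum n f) = csum n (fun k => Cconj (f k)).
Proof. induction n; [cring|]. rewrite !csum_S, <- IHn. cring. Qed.

Lemma csum_opp n f : Copp (csum n f) = csum n (fun k => Copp (f k)).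
Proof. induction n; [cring|]. rewrite !csum_S, <- IHn. cring. Qed.

Lemma csum_zero n f : (forall k, (k < n)%nat -> f k = C0) -> csum n f = C0.
Proof. intros H; rewrite (csum_ext n f (fun _ => C0)); auto. clear H. induction n; auto. rewrite csum_S, IHn. cring. Qed.

Lemma csum_swap n m f :
  csum n (fun i => csum m (fun j => f i j)) = csum m (fun j => csum n (fun i => f i j)).
Proof.
  induction n.
  - rewrite csum_0. symmetry; apply csum_zero; auto.
  - rewrite csum_S, IHn, <- csum_add. apply csum_ext; intros. now rewrite csum_S.
Qed.

Lemma csum_delta n i f : (i < n)%nat ->
  csum n (fun k => if Nat.eqb i k then f k else C0) = f i.
Proof.
  induction n; intros H; [lia|]. rewrite csum_S.
  destruct (Nat.eq_dec i n).
  - subst. rewrite csum_zero. rewrite Nat.eqb_refl; cring.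
    intros k Hk. destruct (Nat.eqb_spec n k); [lia|auto].
  - rewrite IHn by lia. destruct (Nat.eqb_spec i n); [lia|]. cring.
Qed.

Lemma csum_delta' n i f : (i < n)%nat ->
  csum n (fun k => if Nat.eqb k i then f k else C0) = f i.
Proof.
  intros H. rewrite <- (csum_delta n i f H). apply csum_ext; intros.
  now rewrite Nat.eqb_sym.
Qed.

Fixpoint rsum (n : nat) (f : nat -> R) : R :=
  match n with O => 0 | S n' => rsum n' f + f n' end.

Lemma re_csum n f : re (csum n f) = rsum n (fun k => re (f k)).
Proof. induction n; [reflexivity|]. rewrite csum_S; simpl; rewrite <- IHn; reflexivity. Qed.
Lemma im_csum n f : im (csum n f) = rsum n (fun k => im (f k)).
Proof. induction n; [reflexivity|]. rewrite csum_S; simpl; rewrite <- IHn; reflexivity. Qed.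

Lemma rsum_ext n f g : (forall k, (k < n)%nat -> f k = g k) -> rsum n f = rsum n g.
Proof. induction n; intros H; simpl; auto. rewrite IHn, H; auto; intros; apply H; lia. Qed.
Lemma rsum_le n f g : (forall k, (k < n)%nat -> f k <= g k) -> rsum n f <= rsum n g.
Proof. induction n; intros H; simpl; [lra|]. assert (f n <= g n) by (apply H; lia).
  assert (rsum n f <= rsum n g) by (apply IHn; intros; apply H; lia). lra. Qed.
Lemma rsum_nonneg n f : (forall k, (k < n)%nat -> 0 <= f k) -> 0 <= rsum n f.
Proof. intros H. replace 0 with (rsum n (fun _ => 0)). apply rsum_le; auto.
  induction n; simpl; auto. rewrite IHn; auto; lra. Qed.
Lemma rsum_add n f g : rsum n (fun k => f k + g k) = rsum n f + rsum n g.
Proof. induction n; simpl; [ring|]. rewrite IHn; ring. Qed.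
Lemma rsum_scal n c f : rsum n (fun k => c * f k) = c * rsum n f.
Proof. induction n; simpl; [ring|]. rewrite IHn; ring. Qed.
Lemma rsum_abs n f : Rabs (rsum n f) <= rsum n (fun k => Rabs (f k)).
Proof. induction n; simpl. rewrite Rabs_R0; lra.
  eapply Rle_trans. apply Rabs_triang. lra. Qed.
Lemma rsum_zero n f : (forall k, (k < n)%nat -> f k = 0) -> rsum n f = 0.
Proof. induction n; intros H; simpl; auto. rewrite IHn, H; auto; try lra; intros; apply H; lia. Qed.
Lemma rsum_swap n m f :
  rsum n (fun i => rsum m (fun j => f i j)) = rsum m (fun j => rsum n (fun i => f i j)).
Proof.
  induction n; simpl. symmetry; apply rsum_zero; auto.
  rewrite IHn, <- rsum_add. reflexivity.
Qed.
Lemma rsum_pos_single n f k : (k < n)%nat -> (forall j, (j < n)%nat -> 0 <= f j) -> f k <= rsum n f.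
Proof. induction n; intros Hk H; [lia|]. simpl.
  destruct (Nat.eq_dec k n). subst. assert (0 <= rsum n f) by (apply rsum_nonneg; intros; apply H; lia). lra.
  assert (f k <= rsum n f) by (apply IHn; [lia| intros; apply H; lia]). assert (0 <= f n) by (apply H; lia). lra. Qed.

Definition Cinv (x : C) : C :=
  mkC (re x / (re x * re x + im x * im x)) (- im x / (re x * re x + im x * im x)).

Lemma C0_norm x : x <> C0 -> re x * re x + im x * im x <> 0.
Proof.
  intros H E. apply H. destruct x as [a b]; simpl in *.
  assert (a = 0) by nra. assert (b = 0) by nra. subst; reflexivity.
Qed.

Lemma Cmul_inv_r x : x <> C0 -> Cmul x (Cinv x) = C1.
Proof.
  intros H. pose proof (C0_norm x H). apply Ceq; unfold Cmul, Cinv, C1; simpl; field; auto.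
Qed.
Lemma Cmul_inv_l x : x <> C0 -> Cmul (Cinv x) x = C1.
Proof. intros; rewrite Cmul_comm; now apply Cmul_inv_r. Qed.

Lemma Cconj_mul_self x : Cmul (Cconj x) x = RtoC (re x * re x + im x * im x).
Proof. cring. Qed.

Lemma Cmul_eq0 x y : Cmul x y = C0 -> x = C0 \/ y = C0.
Proof.
  intros H. destruct (classic (x = C0)); auto. right.
  rewrite <- (Cmul_1_l y), <- (Cmul_inv_l x) by auto. rewrite <- Cmul_assoc, H. cring.
Qed.

Definition vadd (x y : Vec) : Vec := fun i => Cadd (x i) (y i).
Definition vscale (c : C) (x : Vec) : Vec := fun i => Cmul c (x i).
Definition ip (N : nat) (G : Mat) (x y : Vec) : C :=
  csum N (fun i => Cmul (Cconj (x i)) (mvec N G y i)).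
Definition dot (N : nat) (x y : Vec) : C := csum N (fun i => Cmul (Cconj (x i)) (y i)).

Lemma quad_ip N M v : quad N M v = ip N M v v. Proof. reflexivity. Qed.

Lemma mvec_ext N M v w i : (forall k, (k < N)%nat -> v k = w k) -> mvec N M v i = mvec N M w i.
Proof. intros H; unfold mvec; apply csum_ext; intros; now rewrite H. Qed.

Lemma mvec_mext N M1 M2 v i : (forall k, (k < N)%nat -> M1 i k = M2 i k) -> mvec N M1 v i = mvec N M2 v i.
Proof. intros H; unfold mvec; apply csum_ext; intros; now rewrite H. Qed.

Lemma mvec_mmul N M1 M2 v i : mvec N (mmul N M1 M2) v i = mvec N M1 (mvec N M2 v) i.
Proof.
  unfold mvec, mmul.
  rewrite (csum_ext N _ (fun k => csum N (fun j => Cmul (M1 i j) (Cmul (M2 j k) (v k))))).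
  2:{ intros. rewrite csum_mulr. apply csum_ext; intros; cring. }
  rewrite csum_swap. apply csum_ext; intros. rewrite csum_mull. reflexivity.
Qed.

Lemma mvec_vadd N M x y i : mvec N M (vadd x y) i = Cadd (mvec N M x i) (mvec N M y i).
Proof. unfold mvec, vadd. rewrite <- csum_add. apply csum_ext; intros; cring. Qed.
Lemma mvec_vscale N M c x i : mvec N M (vscale c x) i = Cmul c (mvec N M x i).
Proof. unfold mvec, vscale. rewrite csum_mull. apply csum_ext; intros; cring. Qed.
Lemma mvec_madd N M1 M2 x i : mvec N (madd M1 M2) x i = Cadd (mvec N M1 x i) (mvec N M2 x i).
Proof. unfold mvec, madd. rewrite <- csum_add. apply csum_ext; intros; cring. Qed.
Lemma mvec_msub N M1 M2 x i : mvec N (msub M1 M2) x i = Cadd (mvec N M1 x i) (Copp (mvec N M2 x i)).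
Proof. unfold mvec, msub. rewrite csum_opp, <- csum_add. apply csum_ext; intros; cring. Qed.
Lemma mvec_mscale N c M x i : mvec N (mscale c M) x i = Cmul c (mvec N M x i).
Proof. unfold mvec, mscale. rewrite csum_mull. apply csum_ext; intros; cring. Qed.
Lemma mvec_mid N x i : (i < N)%nat -> mvec N mid x i = x i.
Proof. intros H. unfold mvec, mid. rewrite <- (csum_delta N i x H). apply csum_ext; intros.
  destruct (Nat.eqb i k); cring. Qed.

Lemma dot_madj N M x y :
  dot N x (mvec N (madj M) y) = dot N (mvec N M x) y.
Proof.
  unfold dot, mvec, madj.
  rewrite (csum_ext N _ (fun i => csum N (fun k => Cmul (Cconj (x i)) (Cmul (Cconj (M k i)) (y k))))).
  2:{ intros; apply csum_mull. }
  rewrite csum_swap. apply csum_ext; intros k Hk.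
  rewrite csum_conj, csum_mulr. apply csum_ext; intros; cring.
Qed.

Lemma ip_dot N G x y : ip N G x y = dot N x (mvec N G y). Proof. reflexivity. Qed.

Lemma dot_vadd_r N x y z : dot N x (vadd y z) = Cadd (dot N x y) (dot N x z).
Proof. unfold dot, vadd. rewrite <- csum_add. apply csum_ext; intros; cring. Qed.
Lemma dot_vadd_l N x y z : dot N (vadd x y) z = Cadd (dot N x z) (dot N y z).
Proof. unfold dot, vadd. rewrite <- csum_add. apply csum_ext; intros; cring. Qed.
Lemma dot_vscale_r N c x y : dot N x (vscale c y) = Cmul c (dot N x y).
Proof. unfold dot, vscale. rewrite csum_mull. apply csum_ext; intros; cring. Qed.
Lemma dot_vscale_l N c x y : dot N (vscale c x) y = Cmul (Cconj c) (dot N x y).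
Proof. unfold dot, vscale. rewrite csum_mull. apply csum_ext; intros; cring. Qed.
Lemma dot_ext N x x' y y' : (forall k, (k < N)%nat -> x k = x' k) -> (forall k, (k < N)%nat -> y k = y' k) ->
  dot N x y = dot N x' y'.
Proof. intros H1 H2; unfold dot; apply csum_ext; intros; rewrite H1, H2; auto. Qed.

Lemma ip_vadd_r N G x y z : ip N G x (vadd y z) = Cadd (ip N G x y) (ip N G x z).
Proof. unfold ip. rewrite <- csum_add. apply csum_ext; intros; rewrite mvec_vadd; cring. Qed.
Lemma ip_vadd_l N G x y z : ip N G (vadd x y) z = Cadd (ip N G x z) (ip N G y z).
Proof. unfold ip. rewrite <- csum_add. apply csum_ext; intros; unfold vadd; cring. Qed.
Lemma ip_vscale_r N G c x y : ip N G x (vscale c y) = Cmul c (ip N G x y).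
Proof. unfold ip. rewrite csum_mull. apply csum_ext; intros; rewrite mvec_vscale; cring. Qed.
Lemma ip_vscale_l N G c x y : ip N G (vscale c x) y = Cmul (Cconj c) (ip N G x y).
Proof. unfold ip. rewrite csum_mull. apply csum_ext; intros; unfold vscale; cring. Qed.
Lemma ip_ext N G x x' y y' : (forall k, (k < N)%nat -> x k = x' k) -> (forall k, (k < N)%nat -> y k = y' k) ->
  ip N G x y = ip N G x' y'.
Proof. intros H1 H2; unfold ip; apply csum_ext; intros; rewrite H1. f_equal. apply mvec_ext; auto. auto. Qed.

Lemma herm_ip_conj N G x y : hermitian N G -> Cconj (ip N G x y) = ip N G y x.
Proof.
  intros H. rewrite !ip_dot.
  rewrite (dot_ext N y y (mvec N G x) (mvec N (madj G) x)); auto.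
  2:{ intros k Hk. apply mvec_mext; intros j Hj. apply H; auto. }
  rewrite dot_madj. unfold dot. rewrite csum_conj. apply csum_ext; intros; cring.
Qed.

Lemma herm_quad_real N G x : hermitian N G -> im (quad N G x) = 0.
Proof.
  intros H. pose proof (herm_ip_conj N G x x H) as E. rewrite <- quad_ip in E.
  destruct (quad N G x) as [a b]; unfold Cconj in E; simpl in *. injection E; lra.
Qed.

Lemma herm_quad_eq N G x : hermitian N G -> quad N G x = RtoC (re (quad N G x)).
Proof. intros H; apply Ceq; simpl; auto. now rewrite herm_quad_real. Qed.

Lemma selfadj_ip N G A x y : meq N (mmul N G A) (mmul N (madj A) G) ->
  ip N G x (mvec N A y) = ip N G (mvec N A x) y.
Proof.
  intros H. rewrite !ip_dot.
  rewrite (dot_ext N x x _ (mvec N (madj A) (mvec N G y))); auto.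
  2:{ intros k Hk. rewrite <- !mvec_mmul. apply mvec_mext; intros; apply H; auto. }
  apply dot_madj.
Qed.

Lemma quad_madd N M1 M2 x : quad N (madd M1 M2) x = Cadd (quad N M1 x) (quad N M2 x).
Proof. unfold quad. rewrite <- csum_add. apply csum_ext; intros; rewrite mvec_madd; cring. Qed.
Lemma quad_msub N M1 M2 x : quad N (msub M1 M2) x = Cadd (quad N M1 x) (Copp (quad N M2 x)).
Proof. unfold quad. rewrite csum_opp, <- csum_add. apply csum_ext; intros; rewrite mvec_msub; cring. Qed.
Lemma quad_mscale N c M x : quad N (mscale c M) x = Cmul c (quad N M x).
Proof. unfold quad. rewrite csum_mull. apply csum_ext; intros; rewrite mvec_mscale; cring. Qed.

Lemma quad_sandwich N A G B x :
  quad N (mmul N (mmul N (mmul N (madj A) G) B) A) x = quad N (mmul N G B) (mvec N A x).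
Proof.
  unfold quad. fold (dot N x (mvec N (mmul N (mmul N (mmul N (madj A) G) B) A) x)).
  fold (dot N (mvec N A x) (mvec N (mmul N G B) (mvec N A x))).
  rewrite (dot_ext N x x _ (mvec N (madj A) (mvec N (mmul N G B) (mvec N A x)))); auto.
  2:{ intros k Hk. rewrite !mvec_mmul. apply mvec_ext; intros j Hj. rewrite !mvec_mmul. reflexivity. }
  apply dot_madj.
Qed.

Lemma csum_unit n p c : (p < n)%nat ->
  csum n (fun i => Cmul (c i) (if Nat.eqb i p then C1 else C0)) = c p.
Proof.
  intros H. transitivity (csum n (fun k => if Nat.eqb k p then c k else C0)).
  apply csum_ext; intros. destruct (Nat.eqb k p); cring. apply csum_delta'; auto.
Qed.

Lemma elim_exists : forall n m (a : nat -> nat -> C), (m < n)%nat ->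
  exists x : Vec, (forall i, (n <= i)%nat -> x i = C0) /\ (exists i, (i < n)%nat /\ x i <> C0) /\
   forall j, (j < m)%nat -> csum n (fun i => Cmul (a j i) (x i)) = C0.
Proof.
  induction n as [|n IH]; intros m a Hm; [lia|].
  destruct m as [|m].
  { exists (fun i => if Nat.eqb i 0 then C1 else C0). split; [|split].
    - intros i Hi. destruct (Nat.eqb_spec i 0); [lia|auto].
    - exists 0%nat. split; [lia|]. simpl. intro E. injection E; lra.
    - intros; lia. }
  destruct (classic (exists j0, (j0 < S m)%nat /\ a j0 n <> C0)) as [[j0 [Hj0 Hne]]|Hno].
  - set (sk := fun j' => if Nat.ltb j' j0 then j' else S j').
    set (b := fun j' i => Cadd (a (sk j') i) (Copp (Cmul (a (sk j') n) (Cmul (a j0 i) (Cinv (a j0 n)))))).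
    destruct (IH m b ltac:(lia)) as [y [Hy0 [[i0 [Hi0 Hyi0]] Hyeq]]].
    set (S0 := csum n (fun i => Cmul (a j0 i) (y i))).
    set (t := Copp (Cmul S0 (Cinv (a j0 n)))).
    exists (fun i => if Nat.eqb i n then t else y i). split; [|split].
    + intros i Hi. destruct (Nat.eqb_spec i n); [lia|]. apply Hy0; lia.
    + exists i0. split; [lia|]. destruct (Nat.eqb_spec i0 n); [lia|auto].
    + intros j Hj. rewrite csum_S. rewrite Nat.eqb_refl.
      rewrite (csum_ext n _ (fun i => Cmul (a j i) (y i))).
      2:{ intros k Hk. destruct (Nat.eqb_spec k n); [lia|auto]. }
      destruct (Nat.eq_dec j j0) as [->|Hjj].
      * fold S0. unfold t. rewrite <- (Cmul_1_r S0) at 1. rewrite <- (Cmul_inv_r (a j0 n) Hne).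
        cring.
      * assert (Hex : exists j', (j' < m)%nat /\ sk j' = j).
        { destruct (Nat.ltb_spec j j0) as [Hlt|Hge].
          - exists j. split; [lia|]. unfold sk. destruct (Nat.ltb_spec j j0); lia.
          - exists (pred j). split; [lia|]. unfold sk. destruct (Nat.ltb_spec (pred j) j0); lia. }
        destruct Hex as [j' [Hj' Hsk]].
        pose proof (Hyeq j' Hj') as E. unfold b in E. rewrite Hsk in E.
        rewrite (csum_ext n _ (fun i => Cadd (Cmul (a j i) (y i))
             (Cmul (Copp (Cmul (a j n) (Cinv (a j0 n)))) (Cmul (a j0 i) (y i))))) in E.
        2:{ intros; cring. }
        rewrite csum_add, <- csum_mull in E. fold S0 in E.
        unfold t. rewrite <- E. cring.
  - exists (fun i => if Nat.eqb i n then C1 else C0). split; [|split].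
    + intros i Hi. destruct (Nat.eqb_spec i n); [lia|auto].
    + exists n. split; [lia|]. rewrite Nat.eqb_refl. intro E. injection E; lra.
    + intros j Hj. rewrite csum_unit by lia.
      destruct (classic (a j n = C0)); auto. exfalso; apply Hno; eauto.
Qed.

Definition Ccv (u : nat -> C) (l : C) : Prop :=
  Un_cv (fun n => re (u n)) (re l) /\ Un_cv (fun n => im (u n)) (im l).

Lemma CV_const c : Un_cv (fun _ => c) c.
Proof. intros e He. exists 0%nat. intros. unfold Rdist. rewrite Rminus_diag, Rabs_R0; auto. Qed.

Lemma Ccv_const c : Ccv (fun _ => c) c.
Proof. split; apply CV_const. Qed.

Lemma Ccv_add u v a b : Ccv u a -> Ccv v b -> Ccv (fun n => Cadd (u n) (v n)) (Cadd a b).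
Proof. intros [H1 H2] [H3 H4]; split; simpl; apply CV_plus; auto. Qed.

Lemma Ccv_opp u a : Ccv u a -> Ccv (fun n => Copp (u n)) (Copp a).
Proof. intros [H1 H2]; split; simpl; apply CV_opp; auto. Qed.

Lemma Ccv_conj u a : Ccv u a -> Ccv (fun n => Cconj (u n)) (Cconj a).
Proof. intros [H1 H2]; split; simpl; auto. apply CV_opp; auto. Qed.

Lemma Ccv_mul u v a b : Ccv u a -> Ccv v b -> Ccv (fun n => Cmul (u n) (v n)) (Cmul a b).
Proof.
  intros [H1 H2] [H3 H4]; split; simpl.
  - apply CV_minus; apply CV_mult; auto.
  - apply CV_plus; apply CV_mult; auto.
Qed.

Lemma Un_cv_ext u v l : (forall n, u n = v n) -> Un_cv u l -> Un_cv v l.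
Proof. intros E H e He. destruct (H e He) as [M HM]. exists M. intros; rewrite <- E; auto. Qed.

Lemma Ccv_ext u v a : (forall n, u n = v n) -> Ccv u a -> Ccv v a.
Proof. intros E [H1 H2]; split; eapply Un_cv_ext; eauto; intros; simpl; rewrite E; auto. Qed.

Lemma Ccv_csum m (u : nat -> nat -> C) (a : nat -> C) :
  (forall k, (k < m)%nat -> Ccv (fun n => u n k) (a k)) ->
  Ccv (fun n => csum m (u n)) (csum m a).
Proof.
  induction m; intros H.
  - exact (Ccv_const C0).
  - rewrite csum_S. apply (Ccv_ext (fun n => Cadd (csum m (u n)) (u n m))).
    intros; now rewrite csum_S.
    apply Ccv_add; auto.
Qed.

Lemma Ccv_RtoC u l : Un_cv u l -> Ccv (fun n => RtoC (u n)) (RtoC l).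
Proof. intros H; split; simpl; auto. apply CV_const. Qed.

Definition incr (phi : nat -> nat) := forall n, (phi n < phi (S n))%nat.

Lemma incr_ge phi : incr phi -> forall n, (n <= phi n)%nat.
Proof. intros H n; induction n; [lia|]. specialize (H n); lia. Qed.

Lemma incr_mono phi : incr phi -> forall n m, (n <= m)%nat -> (phi n <= phi m)%nat.
Proof. intros H n m Hnm; induction Hnm; auto. specialize (H m); lia. Qed.

Lemma incr_comp phi psi : incr phi -> incr psi -> incr (fun n => phi (psi n)).
Proof. intros H1 H2 n. pose proof (incr_mono phi H1 (S (psi n)) (psi (S n)) (H2 n)).
  specialize (H1 (psi n)). lia. Qed.

Lemma cv_subseq u l phi : incr phi -> Un_cv u l -> Un_cv (fun n => u (phi n)) l.
Proof. intros Hp H e He. destruct (H e He) as [M HM]. exists M. intros n Hn.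
  apply HM. pose proof (incr_ge phi Hp n); lia. Qed.

Lemma archi_nat e : 0 < e -> exists K : nat, / INR (S K) < e.
Proof.
  intros He. destruct (archimed (/ e)) as [Ha _].
  assert (H0 : (0 <= up (/ e))%Z). { apply le_IZR. pose proof (Rinv_0_lt_compat e He). lra. }
  exists (Z.to_nat (up (/ e))).
  rewrite S_INR, INR_IZR_INZ, Z2Nat.id by auto.
  assert (0 < / e) by (apply Rinv_0_lt_compat; auto).
  set (X := IZR (up (/ e))) in *. 
  apply Rlt_le_trans with (/ / e). apply Rinv_lt_contravar; nra. rewrite Rinv_inv; lra.
Qed.

Lemma BW1 (u : nat -> R) (M : R) : (forall n, Rabs (u n) <= M) ->
  exists phi l, incr phi /\ Un_cv (fun n => u (phi n)) l.
Proof.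
  intros Hb.
  destruct (Bolzano_Weierstrass u (fun c => -M <= c <= M) (compact_P3 (-M) M)) as [l Hl].
  { intros n; specialize (Hb n). unfold Rabs in Hb; destruct (Rcase_abs (u n)); lra. }
  assert (pick : forall k N, {p | (N <= p)%nat /\ Rabs (u p - l) < / INR (S k)}).
  { intros k N. apply constructive_indefinite_description.
    assert (Hpos : 0 < / INR (S k)) by (apply Rinv_0_lt_compat, lt_0_INR; lia).
    destruct (Hl (disc l (mkposreal _ Hpos)) N) as [p [Hp1 Hp2]].
    - exists (mkposreal _ Hpos). intros y Hy; exact Hy.
    - exists p; split; auto. }
  set (phi := fix phi k := match k with
                           | O => proj1_sig (pick O O)
                           | S k' => proj1_sig (pick (S k') (S (phi k')))
                           end).
  exists phi, l. split.
  - intros n. simpl. destruct (pick (S n) (S (phi n))) as [p [H1 H2]]; simpl; lia.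
  - assert (Hk : forall k, Rabs (u (phi k) - l) < / INR (S k)).
    { intros [|k]; simpl; [destruct (pick 0%nat 0%nat) | destruct (pick (S k) (S (phi k)))]; simpl; tauto. }
    intros e He. destruct (archi_nat e He) as [K HK]. exists K. intros n Hn.
    unfold Rdist. eapply Rlt_le_trans. apply Hk.
    apply Rle_trans with (/ INR (S K)); [|lra].
    apply Rinv_le_contravar. apply lt_0_INR; lia. apply le_INR; lia.
Qed.

Lemma Ccv_subseq u a phi : incr phi -> Ccv u a -> Ccv (fun n => u (phi n)) a.
Proof. intros Hp [H1 H2]; split; apply (cv_subseq (fun n => re (u n))) || apply (cv_subseq (fun n => im (u n))); auto. Qed.

Lemma BWvec N (xs : nat -> Vec) :
  (forall n i, (i < N)%nat -> Rabs (re (xs n i)) <= 1 /\ Rabs (im (xs n i)) <= 1) ->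
  exists phi y, incr phi /\ forall i, (i < N)%nat -> Ccv (fun n => xs (phi n) i) (y i).
Proof.
  intros Hb.
  assert (H : forall K, (K <= N)%nat -> exists phi y, incr phi /\ forall i, (i < K)%nat -> Ccv (fun n => xs (phi n) i) (y i)).
  { induction K; intros HK.
    - exists (fun n => n), (fun _ => C0). split; [intros n; lia| intros; lia].
    - destruct IHK as [phi [y [Hp Hc]]]; [lia|].
      destruct (BW1 (fun n => re (xs (phi n) K)) 1) as [psi1 [l1 [Hp1 Hc1]]].
      { intros n; apply Hb; lia. }
      destruct (BW1 (fun n => im (xs (phi (psi1 n)) K)) 1) as [psi2 [l2 [Hp2 Hc2]]].
      { intros n; apply Hb; lia. }
      exists (fun n => phi (psi1 (psi2 n))), (fun i => if Nat.eqb i K then mkC l1 l2 else y i).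
      split.
      + apply incr_comp; auto. apply incr_comp; auto.
      + intros i Hi. destruct (Nat.eqb_spec i K).
        * subst. split; simpl.
          -- apply (cv_subseq (fun n => re (xs (phi (psi1 n)) K))); auto.
          -- auto.
        * apply (Ccv_subseq (fun n => xs (phi (psi1 n)) i)); auto.
          apply (Ccv_subseq (fun n => xs (phi n) i)); auto. apply Hc; lia. }
  apply H; lia.
Qed.

Definition en (N : nat) (x : Vec) : R := re (dot N x x).

Lemma en_rsum N x : en N x = rsum N (fun i => re (x i) * re (x i) + im (x i) * im (x i)).
Proof. unfold en, dot. rewrite re_csum. apply rsum_ext; intros; simpl; ring. Qed.

Lemma en_nonneg N x : 0 <= en N x.
Proof. rewrite en_rsum. apply rsum_nonneg; intros; nra. Qed.

Lemma nz_dec N (x : Vec) : (exists i, (i < N)%nat /\ x i <> C0) \/ (forall i, (i < N)%nat -> x i = C0).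
Proof.
  destruct (classic (exists i, (i < N)%nat /\ x i <> C0)); auto. right. intros i Hi.
  destruct (classic (x i = C0)); auto. exfalso; eauto.
Qed.

Lemma en_pos N x : 0 < en N x -> exists i, (i < N)%nat /\ x i <> C0.
Proof.
  intros H. destruct (nz_dec N x) as [|Hz]; auto. exfalso. rewrite en_rsum in H.
  rewrite rsum_zero in H. lra. intros k Hk; rewrite (Hz k Hk); simpl; ring.
Qed.

Lemma en_pos' N x : (exists i, (i < N)%nat /\ x i <> C0) -> 0 < en N x.
Proof.
  intros [i [Hi Hx]]. rewrite en_rsum.
  assert (0 < re (x i) * re (x i) + im (x i) * im (x i)) by (pose proof (C0_norm _ Hx); nra).
  eapply Rlt_le_trans; [exact H|]. apply (rsum_pos_single N (fun i => re (x i) * re (x i) + im (x i) * im (x i))); auto. intros; nra.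
Qed.

Lemma ip_zero_l N G x y : (forall i, (i < N)%nat -> x i = C0) -> ip N G x y = C0.
Proof. intros H; unfold ip; apply csum_zero; intros; rewrite H; auto; cring. Qed.

Lemma mvec_zero N M x i : (forall k, (k < N)%nat -> x k = C0) -> mvec N M x i = C0.
Proof. intros H; unfold mvec; apply csum_zero; intros; rewrite H; auto; cring. Qed.

Lemma ip_zero_r N G x y : (forall i, (i < N)%nat -> y i = C0) -> ip N G x y = C0.
Proof. intros H; unfold ip; apply csum_zero; intros; rewrite mvec_zero; auto; cring. Qed.

Lemma hpd_nonneg N G x : hpd N G -> 0 <= re (quad N G x).
Proof.
  intros [_ HG]. destruct (nz_dec N x) as [Hn|Hz].
  - apply Rlt_le; apply HG; auto.
  - rewrite quad_ip, (ip_zero_l N G x x); auto. simpl; lra.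
Qed.

Lemma hpd_zero N G x : hpd N G -> re (quad N G x) = 0 -> forall i, (i < N)%nat -> x i = C0.
Proof.
  intros [_ HG] H. destruct (nz_dec N x) as [Hn|Hz]; auto. specialize (HG x Hn); lra.
Qed.

Lemma hpd_zero' N G x : hpd N G -> re (quad N G x) <= 0 -> forall i, (i < N)%nat -> x i = C0.
Proof. intros H1 H2. apply (hpd_zero N G); auto. pose proof (hpd_nonneg N G x H1); lra. Qed.

Lemma Cconj_RtoC r : Cconj (RtoC r) = RtoC r. Proof. cring. Qed.

Lemma quad_scale N G r x : re (quad N G (vscale (RtoC r) x)) = r * r * re (quad N G x).
Proof. rewrite !quad_ip, ip_vscale_l, ip_vscale_r. cunf; simpl. ring. Qed.

Lemma en_scale N r x : en N (vscale (RtoC r) x) = r * r * en N x.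
Proof. unfold en. rewrite dot_vscale_l, dot_vscale_r. cunf; simpl. ring. Qed.

Lemma selfadj_real N G A x : hermitian N G -> meq N (mmul N G A) (mmul N (madj A) G) ->
  im (ip N G x (mvec N A x)) = 0.
Proof.
  intros HG HA. pose proof (herm_ip_conj N G x (mvec N A x) HG) as E.
  rewrite <- (selfadj_ip N G A x x HA) in E.
  destruct (ip N G x (mvec N A x)) as [a b]; unfold Cconj in E; simpl in *. injection E; lra.
Qed.

Lemma rayleigh_bound N G A CA x : hpd N G -> meq N (mmul N G A) (mmul N (madj A) G) ->
  Gopnorm_le N G A CA ->
  re (ip N G x (mvec N A x)) <= (Rabs CA + 1) * re (quad N G x).
Proof.
  intros HG HA Hn. set (K := Rabs CA + 1).
  assert (HK : 0 < K) by (unfold K; pose proof (Rabs_pos CA); lra).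
  set (y := mvec N A x).
  assert (Hy : re (quad N G y) <= K * K * re (quad N G x)).
  { specialize (Hn x). unfold Gnormv in Hn. fold y in Hn.
    pose proof (hpd_nonneg N G x HG). pose proof (hpd_nonneg N G y HG).
    assert (sqrt (re (quad N G y)) <= K * sqrt (re (quad N G x))).
    { eapply Rle_trans; [exact Hn|]. apply Rmult_le_compat_r. apply sqrt_pos.
      unfold K; pose proof (Rle_abs CA); lra. }
    pose proof (sqrt_pos (re (quad N G x))).
    rewrite <- (sqrt_sqrt (re (quad N G y))), <- (sqrt_sqrt (re (quad N G x))) by auto.
    pose proof (sqrt_pos (re (quad N G y))). nra. }
  pose proof (hpd_nonneg N G (vadd y (vscale (RtoC (- K)) x)) HG) as H0.
  rewrite quad_ip, ip_vadd_l, !ip_vadd_r, !ip_vscale_l, !ip_vscale_r in H0.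
  rewrite <- (herm_ip_conj N G x y (proj1 HG)) in H0.
  pose proof (selfadj_real N G A x (proj1 HG) HA) as Him. fold y in Him.
  rewrite !quad_ip in *. fold y.
  destruct (ip N G x y) as [a b]; destruct (ip N G y y) as [p1 p2]; destruct (ip N G x x) as [q1 q2].
  simpl in *. subst b. cunf; simpl in H0. nra.
Qed.

Definition vcv N (xs : nat -> Vec) (y : Vec) := forall k, (k < N)%nat -> Ccv (fun n => xs n k) (y k).

Lemma Ccv_mvec N M xs y i : vcv N xs y -> Ccv (fun n => mvec N M (xs n) i) (mvec N M y i).
Proof. intros H. unfold mvec. apply (Ccv_csum N (fun n k => Cmul (M i k) (xs n k))).
  intros; apply Ccv_mul; auto. apply Ccv_const. Qed.

Lemma Ccv_dot N xs ys x y : vcv N xs x -> vcv N ys y -> Ccv (fun n => dot N (xs n) (ys n)) (dot N x y).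
Proof. intros H1 H2. unfold dot. apply (Ccv_csum N (fun n k => Cmul (Cconj (xs n k)) (ys n k))).
  intros; apply Ccv_mul; auto. apply Ccv_conj; auto. Qed.

Lemma vcv_mvec N M xs y : vcv N xs y -> vcv N (fun n => mvec N M (xs n)) (mvec N M y).
Proof. intros H k Hk; apply Ccv_mvec; auto. Qed.

Lemma vcv_const N x : vcv N (fun _ => x) x.
Proof. intros k Hk; apply Ccv_const. Qed.

Lemma Ccv_ip N G xs ys x y : vcv N xs x -> vcv N ys y -> Ccv (fun n => ip N G (xs n) (ys n)) (ip N G x y).
Proof. intros H1 H2. rewrite (ip_dot N G x y). apply (Ccv_ext (fun n => dot N (xs n) (mvec N G (ys n)))).
  intros; reflexivity. apply Ccv_dot; auto. apply vcv_mvec; auto. Qed.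

Lemma cv_unique_const u c l : (forall n, u n = c) -> Un_cv u l -> l = c.
Proof. intros E H. apply (UL_sequence u); auto. eapply Un_cv_ext; [|apply (CV_const c)]. intros; auto. Qed.

Lemma Ccv_unique_const u c l : (forall n, u n = c) -> Ccv u l -> l = c.
Proof. intros E [H1 H2]. apply Ceq.
  apply (cv_unique_const (fun n => re (u n))); auto; intros; rewrite E; auto.
  apply (cv_unique_const (fun n => im (u n))); auto; intros; rewrite E; auto. Qed.

Lemma quad_zero_lin (a b : R) : (forall r, a * r + b * (r * r) <= 0) -> a = 0.
Proof.
  intros H. destruct (Req_dec a 0) as [|Ha]; auto. exfalso.
  set (t := Rabs b + 1). assert (Ht : 0 < t) by (unfold t; pose proof (Rabs_pos b); lra).
  set (r := a / (2 * t)). specialize (H r).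
  assert (Hr : r * (2 * t) = a) by (unfold r; field; lra).
  assert (Hb : - t < b < t) by (unfold t; unfold Rabs; destruct (Rcase_abs b); lra).
  assert (0 < a * a) by nra.
  (* a r + b r^2 = r (a + b r) ; a = 2 t r *)
  rewrite <- Hr in H. assert (r <> 0) by (intro E; rewrite E in Hr; lra).
  assert (0 < r * r) by nra. nra.
Qed.

Lemma Rle_div_l a b c : 0 < b -> a <= c * b -> a / b <= c.
Proof. intros Hb H. apply (Rmult_le_reg_r b); auto. unfold Rdiv. rewrite Rmult_assoc, Rinv_l by lra. lra. Qed.
Lemma Rle_div_l' a b c : 0 < b -> a / b <= c -> a <= c * b.
Proof. intros Hb H. apply (Rmult_le_compat_r b) in H; [|lra]. unfold Rdiv in H. rewrite Rmult_assoc, Rinv_l in H by lra. lra. Qed.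

Lemma en_normalize N x : 0 < en N x -> en N (vscale (RtoC (/ sqrt (en N x))) x) = 1.
Proof.
  intros H. rewrite en_scale. pose proof (sqrt_lt_R0 _ H). pose proof (sqrt_sqrt (en N x) (Rlt_le _ _ H)).
  set (q := sqrt (en N x)) in *. rewrite <- H1. field. lra.
Qed.

Lemma ip_as_lin N G v x :
  ip N G v x = csum N (fun l => Cmul (csum N (fun i => Cmul (Cconj (v i)) (G i l))) (x l)).
Proof.
  unfold ip, mvec.
  rewrite (csum_ext N _ (fun i => csum N (fun l => Cmul (Cmul (Cconj (v i)) (G i l)) (x l)))).
  2:{ intros. rewrite csum_mull. apply csum_ext; intros; cring. }
  rewrite csum_swap. apply csum_ext; intros. rewrite csum_mulr. reflexivity.
Qed.

Lemma ipA_vadd_r N G A x w1 w2 :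
  ip N G x (mvec N A (vadd w1 w2)) = Cadd (ip N G x (mvec N A w1)) (ip N G x (mvec N A w2)).
Proof. rewrite <- ip_vadd_r. apply ip_ext; auto. intros; apply mvec_vadd. Qed.
Lemma ipA_vscale_r N G A x c w :
  ip N G x (mvec N A (vscale c w)) = Cmul c (ip N G x (mvec N A w)).
Proof. rewrite <- ip_vscale_r. apply ip_ext; auto. intros; apply mvec_vscale. Qed.

Lemma rA_scale N G A r x :
  re (ip N G (vscale (RtoC r) x) (mvec N A (vscale (RtoC r) x))) = r * r * re (ip N G x (mvec N A x)).
Proof. rewrite ip_vscale_l, ipA_vscale_r. cunf; simpl. ring. Qed.

Section Eig.
Variables (N : nat) (G A : Mat) (CA : R).
Hypothesis HG : hpd N G.
Hypothesis HA : meq N (mmul N G A) (mmul N (madj A) G).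
Hypothesis HnA : Gopnorm_le N G A CA.

Definition rA x := re (ip N G x (mvec N A x)).
Definition qG x := re (quad N G x).

Definition Hf (s : R) x w := Cadd (ip N G x (mvec N A w)) (Copp (Cmul (RtoC s) (ip N G x w))).

Lemma Hf_conj s x w : Cconj (Hf s x w) = Hf s w x.
Proof.
  unfold Hf. rewrite Cconj_add. rewrite (herm_ip_conj N G x (mvec N A w) (proj1 HG)).
  rewrite <- (selfadj_ip N G A w x HA).
  assert (E : Cconj (Copp (Cmul (RtoC s) (ip N G x w))) = Copp (Cmul (RtoC s) (Cconj (ip N G x w)))) by cring.
  rewrite E, (herm_ip_conj N G x w (proj1 HG)). reflexivity.
Qed.

Lemma Hf_add_l s x1 x2 w : Hf s (vadd x1 x2) w = Cadd (Hf s x1 w) (Hf s x2 w).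
Proof. unfold Hf. rewrite !ip_vadd_l. cring. Qed.
Lemma Hf_add_r s x w1 w2 : Hf s x (vadd w1 w2) = Cadd (Hf s x w1) (Hf s x w2).
Proof. unfold Hf. rewrite ipA_vadd_r, ip_vadd_r. cring. Qed.
Lemma Hf_scale_l s c x w : Hf s (vscale c x) w = Cmul (Cconj c) (Hf s x w).
Proof. unfold Hf. rewrite !ip_vscale_l. cring. Qed.
Lemma Hf_scale_r s c x w : Hf s x (vscale c w) = Cmul c (Hf s x w).
Proof. unfold Hf. rewrite ipA_vscale_r, ip_vscale_r. cring. Qed.

Lemma Hf_diag s x : re (Hf s x x) = rA x - s * qG x.
Proof. unfold Hf, rA, qG. rewrite quad_ip. cunf; simpl. ring. Qed.

Lemma variational (W : Vec -> Prop) s y :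
  (forall x w, W x -> W w -> W (vadd x w)) -> (forall c x, W x -> W (vscale c x)) ->
  W y -> rA y = s * qG y -> (forall z, W z -> rA z <= s * qG z) ->
  forall z, W z -> Hf s z y = C0.
Proof.
  intros Wadd Wsc Wy Hy Hmax.
  assert (Hre : forall z, W z -> re (Hf s z y) = 0).
  { intros z Wz. cut (2 * re (Hf s z y) = 0). lra. apply (quad_zero_lin (2 * re (Hf s z y)) (re (Hf s z z))).
    intros r. pose proof (Hmax (vadd y (vscale (RtoC r) z)) (Wadd _ _ Wy (Wsc _ _ Wz))) as H.
    assert (H' : re (Hf s (vadd y (vscale (RtoC r) z)) (vadd y (vscale (RtoC r) z))) <= 0) by (rewrite Hf_diag; lra).
    clear H; rename H' into H.
    assert (E : re (Hf s y y) = 0) by (rewrite Hf_diag; lra).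
    rewrite Hf_add_l, !Hf_add_r, !Hf_scale_l, !Hf_scale_r in H.
    rewrite <- (Hf_conj s z y) in H.
    destruct (Hf s y y) as [a1 a2]; destruct (Hf s z y) as [b1 b2]; destruct (Hf s z z) as [c1 c2].
    simpl in E. cunf; simpl in *. nra. }
  intros z Wz. pose proof (Hre z Wz) as H1. pose proof (Hre _ (Wsc Ci z Wz)) as H2.
  rewrite Hf_scale_l in H2. destruct (Hf s z y) as [a b]. cunf; simpl in *. apply Ceq; simpl; lra.
Qed.


Lemma inv_S_cv : Un_cv (fun n => / INR (S n)) 0.
Proof.
  intros e He. destruct (archi_nat e He) as [K HK]. exists K. intros n Hnn. unfold Rdist.
  rewrite Rminus_0_r. rewrite Rabs_right.
  - apply Rle_lt_trans with (/ INR (S K)); auto. apply Rinv_le_contravar. apply lt_0_INR; lia. apply le_INR; lia.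
  - apply Rle_ge, Rlt_le, Rinv_0_lt_compat, lt_0_INR; lia.
Qed.

Lemma eig_exists (k : nat) (vs : nat -> Vec) (lam : nat -> R) :
  (k < N)%nat ->
  (forall j, (j < k)%nat -> forall i, (i < N)%nat -> mvec N A (vs j) i = Cmul (RtoC (lam j)) (vs j i)) ->
  exists y s, (forall j, (j < k)%nat -> ip N G (vs j) y = C0) /\ (exists i, (i < N)%nat /\ y i <> C0) /\
     forall i, (i < N)%nat -> mvec N A y i = Cmul (RtoC s) (y i).
Proof.
  intros Hk Hev.
  set (W := fun x => forall j, (j < k)%nat -> ip N G (vs j) x = C0).
  assert (Wadd : forall x w, W x -> W w -> W (vadd x w)).
  { intros x w H1 H2 j Hj. rewrite ip_vadd_r, H1, H2 by auto. cring. }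
  assert (Wsc : forall c x, W x -> W (vscale c x)).
  { intros c x H1 j Hj. rewrite ip_vscale_r, H1 by auto. cring. }
  destruct (elim_exists N k (fun j l => csum N (fun i => Cmul (Cconj (vs j i)) (G i l))) Hk)
    as [x0 [_ [Hnz0 Heq0]]].
  assert (W0 : W x0). { intros j Hj. rewrite ip_as_lin. apply Heq0; auto. }
  pose proof (en_pos' N x0 Hnz0) as Hen0.
  set (x1 := vscale (RtoC (/ sqrt (en N x0))) x0).
  assert (Hx1 : W x1 /\ en N x1 = 1).
  { split. apply Wsc; auto. apply en_normalize; auto. }
  set (f := fun x => rA x / qG x).
  set (K := Rabs CA + 1).
  assert (HqS : forall x, en N x = 1 -> 0 < qG x).
  { intros x Hx. apply (proj2 HG). apply en_pos. lra. }
  assert (HfK : forall x, en N x = 1 -> f x <= K).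
  { intros x Hx. unfold f. pose proof (HqS x Hx). apply Rle_div_l; auto.
    apply rayleigh_bound; auto. }
  set (E := fun r => exists x, W x /\ en N x = 1 /\ r = f x).
  destruct (completeness E) as [s [Hub Hlub]].
  { exists K. intros r [x [_ [Hx ->]]]. auto. }
  { exists (f x1). exists x1. tauto. }
  assert (Hex : forall n, exists x, W x /\ en N x = 1 /\ s - / INR (S n) < f x).
  { intros n. apply NNPP. intros Hno.
    assert (Hb : is_upper_bound E (s - / INR (S n))).
    { intros r [x [Wx [Hx ->]]]. apply Rnot_lt_le. intro Hlt. apply Hno. exists x. auto. }
    specialize (Hlub _ Hb). pose proof (Rinv_0_lt_compat (INR (S n)) (lt_0_INR _ (Nat.lt_0_succ n))). lra. }
  set (xs := fun n => proj1_sig (constructive_indefinite_description _ (Hex n))).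
  assert (Hxs : forall n, W (xs n) /\ en N (xs n) = 1 /\ s - / INR (S n) < f (xs n)).
  { intros n. unfold xs. destruct (constructive_indefinite_description _ (Hex n)); simpl; auto. }
  destruct (BWvec N xs) as [phi [y [Hphi Hcv]]].
  { intros n i Hi. destruct (Hxs n) as [_ [Hen _]]. rewrite en_rsum in Hen.
    pose proof (rsum_pos_single N (fun i => re (xs n i) * re (xs n i) + im (xs n i) * im (xs n i)) i Hi
       (fun j _ => ltac:(nra))) as Hle. simpl in Hle.
    split; apply Rabs_le; nra. }
  set (ys := fun n => xs (phi n)).
  assert (Hcv' : vcv N ys y) by exact Hcv.
  assert (Heny : en N y = 1).
  { destruct (Ccv_dot N ys ys y y Hcv' Hcv') as [H1 _].
    apply (cv_unique_const _ 1 _ (fun n => proj1 (proj2 (Hxs (phi n))))) in H1. exact H1. }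
  assert (Wy : W y).
  { intros j Hj. apply (Ccv_unique_const (fun n => ip N G (vs j) (ys n))).
    intros n. apply (proj1 (Hxs (phi n))); auto.
    apply Ccv_ip; auto. apply vcv_const. }
  pose proof (HqS y Heny) as Hqy.
  assert (Hle1 : rA y <= s * qG y).
  { assert (f y <= s) by (apply Hub; exists y; auto). unfold f in H. apply Rle_div_l' in H; auto; lra. }
  assert (Hle2 : s * qG y <= rA y).
  { assert (Ha : Un_cv (fun n => rA (ys n)) (rA y)).
    { unfold rA. apply (Ccv_ip N G ys (fun n => mvec N A (ys n)) y (mvec N A y)); auto. apply vcv_mvec; auto. }
    assert (Hq : Un_cv (fun n => qG (ys n)) (qG y)).
    { unfold qG. apply (Ccv_ip N G ys ys y y); auto. }
    assert (He : Un_cv (fun n => / INR (S (phi n))) 0).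
    { apply (cv_subseq (fun n => / INR (S n))); auto. apply inv_S_cv. }
    assert (Hlim : Un_cv (fun n => rA (ys n) - s * qG (ys n) + / INR (S (phi n)) * qG (ys n))
                         (rA y - s * qG y + 0 * qG y)).
    { apply CV_plus. apply CV_minus; auto. apply CV_mult; auto. apply CV_const. apply CV_mult; auto. }
    assert (Hpos : forall n, 0 <= rA (ys n) - s * qG (ys n) + / INR (S (phi n)) * qG (ys n)).
    { intros n. destruct (Hxs (phi n)) as [_ [Hen Hf]]. pose proof (HqS _ Hen). fold (ys n) in Hf, Hen, H.
      unfold f in Hf. apply Rlt_le.
      assert (s - / INR (S (phi n)) < rA (ys n) / qG (ys n)) by exact Hf.
      apply (Rmult_lt_compat_r (qG (ys n))) in H0; auto. unfold Rdiv in H0.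
      rewrite Rmult_assoc, Rinv_l in H0 by lra. lra. }
    pose proof (@Rle_cv_lim (fun _ => 0) _ 0 _ Hpos (CV_const 0) Hlim) as HH. lra. }
  assert (Hmax : forall z, W z -> rA z <= s * qG z).
  { intros z Wz. pose proof (en_nonneg N z) as Hz. destruct Hz as [Hz|Hz].
    - set (z1 := vscale (RtoC (/ sqrt (en N z))) z).
      assert (Hz1 : en N z1 = 1).
      { apply en_normalize; auto. }
      assert (f z1 <= s) by (apply Hub; exists z1; split; [apply Wsc; auto| split; auto]).
      unfold f, z1, rA, qG in H. rewrite rA_scale, quad_scale in H.
      set (c := / sqrt (en N z)) in H.
      assert (Hc : 0 < c * c). { unfold c. pose proof (sqrt_lt_R0 _ Hz). pose proof (Rinv_0_lt_compat _ H0). nra. }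
      pose proof (proj2 HG z (en_pos N z Hz)).
      replace (c * c * re (ip N G z (mvec N A z)) / (c * c * re (quad N G z))) with (rA z / qG z) in H
        by (unfold rA, qG; field; repeat split; nra).
      apply Rle_div_l' in H; auto. 
    - assert (Hz0 : forall i, (i < N)%nat -> z i = C0).
      { destruct (nz_dec N z) as [Hnz|]; auto. pose proof (en_pos' N z Hnz); lra. }
      unfold rA, qG. rewrite quad_ip, !(ip_zero_l N G z); auto. simpl; lra. }
  pose proof (variational W s y Wadd Wsc Wy ltac:(lra) Hmax) as Hvar.
  set (w := vadd (mvec N A y) (vscale (RtoC (- s)) y)).
  assert (Hw : forall z, ip N G z w = Hf s z y).
  { intros z. unfold w, Hf. rewrite ip_vadd_r, ip_vscale_r. cring. }
  assert (Ww : W w).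
  { intros j Hj. rewrite Hw. unfold Hf. rewrite (selfadj_ip N G A (vs j) y HA).
    rewrite (ip_ext N G (mvec N A (vs j)) (vscale (RtoC (lam j)) (vs j)) y y); auto.
    rewrite ip_vscale_l. rewrite (Wy j Hj). cring. }
  assert (Hw0 : forall i, (i < N)%nat -> w i = C0).
  { apply (hpd_zero N G w HG). rewrite quad_ip, Hw, (Hvar w Ww). reflexivity. }
  exists y, s. split; auto. split. apply en_pos; lra.
  intros i Hi. specialize (Hw0 i Hi). unfold w, vadd, vscale in Hw0.
  destruct (mvec N A y i) as [a b]; destruct (y i) as [c d]. cunf; simpl in *.
  injection Hw0; intros. apply Ceq; simpl; lra.
Qed.

End Eig.

Definition kd (j l : nat) : C := if Nat.eqb j l then C1 else C0.

Lemma ip_csum_r N G v m (c : nat -> C) (u : nat -> Vec) :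
  ip N G v (fun i => csum m (fun k => Cmul (c k) (u k i))) = csum m (fun k => Cmul (c k) (ip N G v (u k))).
Proof.
  induction m.
  - apply ip_zero_r. intros; reflexivity.
  - rewrite csum_S. rewrite <- IHm. rewrite <- ip_vscale_r, <- ip_vadd_r.
    apply ip_ext; auto. intros; unfold vadd, vscale; rewrite csum_S; reflexivity.
Qed.

Lemma csum_kd n j (c : nat -> C) : (j < n)%nat -> csum n (fun k => Cmul (kd j k) (c k)) = c j.
Proof.
  intros H. transitivity (csum n (fun k => if Nat.eqb j k then c k else C0)).
  apply csum_ext; intros; unfold kd; destruct (Nat.eqb j k); cring. apply csum_delta; auto.
Qed.

Section Basis.
Variables (N : nat) (G A : Mat) (CA : R).
Hypothesis HG : hpd N G.
Hypothesis HA : meq N (mmul N G A) (mmul N (madj A) G).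
Hypothesis HnA : Gopnorm_le N G A CA.

Definition orthonormal k (vs : nat -> Vec) :=
  forall j l, (j < k)%nat -> (l < k)%nat -> ip N G (vs j) (vs l) = kd j l.

Lemma completeness vs : orthonormal N vs ->
  forall x i, (i < N)%nat -> x i = csum N (fun k => Cmul (vs k i) (ip N G (vs k) x)).
Proof.
  intros Hon x.
  set (w := fun i => Cadd (x i) (Copp (csum N (fun k => Cmul (ip N G (vs k) x) (vs k i))))).
  assert (Hw : forall j, (j < N)%nat -> ip N G (vs j) w = C0).
  { intros j Hj. unfold w. 
    assert (E : forall i, Cadd (x i) (Copp (csum N (fun k => Cmul (ip N G (vs k) x) (vs k i))))
          = vadd x (fun i => csum N (fun k => Cmul (Copp (ip N G (vs k) x)) (vs k i))) i).
    { intros i; unfold vadd. rewrite csum_opp. f_equal. apply csum_ext; intros; cring. }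
    rewrite (ip_ext N G (vs j) (vs j) _ _ (fun _ _ => eq_refl) (fun i _ => E i)).
    rewrite ip_vadd_r, ip_csum_r.
    rewrite (csum_ext N _ (fun k => Cmul (Copp (kd j k)) (ip N G (vs k) x))).
    2:{ intros k Hk. rewrite Hon by auto. cring. }
    rewrite (csum_ext N _ (fun k => Cmul (kd j k) ((fun k => Copp (ip N G (vs k) x)) k))) by (intros; cring).
    rewrite csum_kd by auto. cring. }
  assert (Hw0 : forall i, (i < N)%nat -> w i = C0).
  { destruct (nz_dec N w) as [Hnz|]; auto. exfalso.
    set (u := fun k => if Nat.ltb k N then vs k else w).
    destruct (elim_exists (S N) N (fun j k => u k j) ltac:(lia)) as [c [_ [[k0 [Hk0 Hc0]] Hc]]].
    set (z := fun i => csum (S N) (fun k => Cmul (c k) (u k i))).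
    assert (Hz : forall i, (i < N)%nat -> z i = C0).
    { intros i Hi. unfold z. rewrite <- (Hc i Hi). apply csum_ext; intros; cring. }
    assert (Hcj : forall j, (j < N)%nat -> c j = C0).
    { intros j Hj. pose proof (ip_csum_r N G (vs j) (S N) c u) as E. fold z in E.
      rewrite (ip_zero_r N G _ z Hz), csum_S in E.
      assert (Eu : u N = w) by (unfold u; rewrite Nat.ltb_irrefl; auto). rewrite Eu, Hw in E by auto.
      rewrite (csum_ext N _ (fun k => Cmul (kd j k) (c k))) in E.
      2:{ intros k Hk. unfold u. destruct (Nat.ltb_spec k N); [|lia]. rewrite Hon by auto. cring. }
      rewrite csum_kd in E by auto. rewrite E. cring. }
    assert (HcN : c N = C0).
    { pose proof (ip_csum_r N G w (S N) c u) as E. fold z in E.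
      rewrite (ip_zero_r N G _ z Hz), csum_S in E.
      rewrite csum_zero in E.
      2:{ intros k Hk. unfold u. destruct (Nat.ltb_spec k N); [|lia]. rewrite <- (herm_ip_conj N G (vs k) w (proj1 HG)).
          rewrite Hw by auto. cring. }
      assert (Eu : u N = w) by (unfold u; rewrite Nat.ltb_irrefl; auto). rewrite Eu in E.
      assert (Hq : ip N G w w <> C0). { intro Hq. pose proof (proj2 HG w Hnz). rewrite quad_ip, Hq in H. simpl in H; lra. }
      symmetry in E. rewrite Cadd_0_l in E. destruct (Cmul_eq0 _ _ E); auto. contradiction. }
    apply Hc0. destruct (Nat.eq_dec k0 N). subst; auto. apply Hcj; lia. }
  intros i Hi. specialize (Hw0 i Hi). unfold w in Hw0.
  rewrite (csum_ext N _ (fun k => Cmul (ip N G (vs k) x) (vs k i))) by (intros; cring).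
  destruct (x i) as [a b]; destruct (csum N (fun k => Cmul (ip N G (vs k) x) (vs k i))) as [c d].
  cunf; injection Hw0; intros; apply Ceq; simpl; lra.
Qed.


Lemma kd_refl j : kd j j = C1. Proof. unfold kd; now rewrite Nat.eqb_refl. Qed.
Lemma kd_neq j l : j <> l -> kd j l = C0. Proof. intros H; unfold kd; destruct (Nat.eqb_spec j l); auto; lia. Qed.

Lemma basis_partial : forall k, (k <= N)%nat -> exists vs lam, orthonormal k vs /\
  (forall j, (j < k)%nat -> forall i, (i < N)%nat -> mvec N A (vs j) i = Cmul (RtoC (lam j)) (vs j i)).
Proof.
  induction k; intros Hk.
  - exists (fun _ _ => C0), (fun _ => 0). split; [intros j l Hj; lia | intros j Hj; lia].
  - destruct IHk as [vs [lam [Hon Hev]]]; [lia|].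
    destruct (eig_exists N G A CA HG HA HnA k vs lam ltac:(lia) Hev) as [y [s [Wy [Hnz Hey]]]].
    pose proof (proj2 HG y Hnz) as Hq.
    set (c := / sqrt (re (quad N G y))).
    assert (Hc : c * c * re (quad N G y) = 1).
    { unfold c. pose proof (sqrt_lt_R0 _ Hq). pose proof (sqrt_sqrt _ (Rlt_le _ _ Hq)).
      set (q := sqrt (re (quad N G y))) in *. rewrite <- H0. field. lra. }
    set (v := vscale (RtoC c) y).
    exists (fun j => if Nat.eqb j k then v else vs j), (fun j => if Nat.eqb j k then s else lam j).
    split.
    + intros j l Hj Hl. destruct (Nat.eqb_spec j k); destruct (Nat.eqb_spec l k).
      * subst. rewrite kd_refl. unfold v. rewrite ip_vscale_l, ip_vscale_r, <- quad_ip.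
        rewrite (herm_quad_eq N G y (proj1 HG)). apply Ceq; cunf; simpl; nra.
      * subst. rewrite kd_neq by lia. unfold v. rewrite ip_vscale_l.
        rewrite <- (herm_ip_conj N G (vs l) y (proj1 HG)), Wy by lia. cring.
      * subst. rewrite kd_neq by lia. unfold v. rewrite ip_vscale_r, Wy by lia. cring.
      * apply Hon; lia.
    + intros j Hj i Hi. destruct (Nat.eqb_spec j k).
      * unfold v. rewrite mvec_vscale, Hey by auto. unfold vscale. cring.
      * apply Hev; auto; lia.
Qed.

Lemma eig_bound v lam : ip N G v v = C1 ->
  (forall i, (i < N)%nat -> mvec N A v i = Cmul (RtoC lam) (v i)) -> Rabs lam <= CA.
Proof.
  intros H1 H2. specialize (HnA v). unfold Gnormv in HnA.
  assert (E : re (quad N G (mvec N A v)) = Rsqr lam).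
  { rewrite quad_ip, (ip_ext N G (mvec N A v) (vscale (RtoC lam) v) (mvec N A v) (vscale (RtoC lam) v)) by auto.
    rewrite <- quad_ip, quad_scale, quad_ip, H1. simpl. unfold Rsqr; ring. }
  assert (E2 : re (quad N G v) = 1) by (rewrite quad_ip, H1; reflexivity).
  rewrite E, E2, sqrt_1, sqrt_Rsqr_abs in HnA. lra.
Qed.

Lemma basis_exists : exists vs lam, orthonormal N vs /\
  (forall j, (j < N)%nat -> forall i, (i < N)%nat -> mvec N A (vs j) i = Cmul (RtoC (lam j)) (vs j i)) /\
  (forall j, (j < N)%nat -> Rabs (lam j) <= CA).
Proof.
  destruct (basis_partial N (le_n N)) as [vs [lam [Hon Hev]]].
  exists vs, lam. repeat split; auto.
  intros j Hj. apply (eig_bound (vs j)); auto. rewrite Hon by auto. apply kd_refl.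
Qed.

End Basis.

Fixpoint Cpow (z : C) (m : nat) : C := match m with O => C1 | S m' => Cmul z (Cpow z m') end.

Fixpoint expS (z : C) (n : nat) : C :=
  match n with
  | O => C1
  | S n' => Cadd (expS z n') (Cmul (RtoC (/ INR (fact (S n')))) (Cpow z (S n')))
  end.

Section Spec.
Variables (N : nat) (M : Mat) (p q : nat -> Vec) (mu : nat -> C).
Hypothesis Hc : forall i j, (i < N)%nat -> (j < N)%nat -> mid i j = csum N (fun k => Cmul (p k i) (q k j)).
Hypothesis He : forall k i, (k < N)%nat -> (i < N)%nat -> mvec N M (p k) i = Cmul (mu k) (p k i).

Lemma mpow_spec m i j : (i < N)%nat -> (j < N)%nat ->
  mpow N M m i j = csum N (fun k => Cmul (Cpow (mu k) m) (Cmul (p k i) (q k j))).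
Proof.
  revert i j; induction m; intros i j Hi Hj.
  - simpl. rewrite Hc by auto. apply csum_ext; intros; cring.
  - simpl. unfold mmul.
    rewrite (csum_ext N _ (fun l => csum N (fun k => Cmul (Cmul (Cpow (mu k) m) (q k j)) (Cmul (M i l) (p k l))))).
    2:{ intros l Hl. rewrite IHm by auto. rewrite csum_mull. apply csum_ext; intros; cring. }
    rewrite csum_swap. apply csum_ext; intros k Hk.
    rewrite <- csum_mull. fold (mvec N M (p k) i). rewrite He by auto. cring.
Qed.

Lemma mexp_partial_spec n i j : (i < N)%nat -> (j < N)%nat ->
  mexp_partial N M n i j = csum N (fun k => Cmul (expS (mu k) n) (Cmul (p k i) (q k j))).
Proof.
  intros Hi Hj. induction n.
  - simpl. rewrite Hc by auto. apply csum_ext; intros; cring.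
  - cbn [mexp_partial]. unfold madd, mscale. rewrite IHn. rewrite (mpow_spec (S n)) by auto. cbn [expS].
    rewrite csum_mull, <- csum_add. apply csum_ext; intros; cring.
Qed.

End Spec.

Lemma Rlim_eq u l : Un_cv u l -> Rlim u = l.
Proof.
  intros H. unfold Rlim. apply (UL_sequence u); auto.
  apply (epsilon_spec (inhabits 0) (fun l => Un_cv u l)). eauto.
Qed.

Lemma mexp_spec N M p q mu (E : nat -> C) :
  (forall i j, (i < N)%nat -> (j < N)%nat -> mid i j = csum N (fun k => Cmul (p k i) (q k j))) ->
  (forall k i, (k < N)%nat -> (i < N)%nat -> mvec N M (p k) i = Cmul (mu k) (p k i)) ->
  (forall k, (k < N)%nat -> Ccv (expS (mu k)) (E k)) ->
  forall i j, (i < N)%nat -> (j < N)%nat ->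
  mexp N M i j = csum N (fun k => Cmul (E k) (Cmul (p k i) (q k j))).
Proof.
  intros Hc He Hcv i j Hi Hj.
  assert (H : Ccv (fun n => mexp_partial N M n i j) (csum N (fun k => Cmul (E k) (Cmul (p k i) (q k j))))).
  { apply (Ccv_ext (fun n => csum N (fun k => Cmul (expS (mu k) n) (Cmul (p k i) (q k j))))).
    intros; symmetry; apply mexp_partial_spec; auto.
    apply (Ccv_csum N (fun n k => Cmul (expS (mu k) n) (Cmul (p k i) (q k j)))).
    intros; apply Ccv_mul; auto. apply Ccv_const. }
  destruct H as [H1 H2]. unfold mexp. apply Ceq; simpl; apply Rlim_eq; auto.
Qed.

Definition cis (t : R) : C := mkC (cos t) (sin t).

Lemma Cpow_even th p : Cpow (mkC 0 th) (2 * p) = mkC ((-1) ^ p * (Rsqr th) ^ p) 0.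
Proof.
  induction p.
  - apply Ceq; simpl; ring.
  - replace (2 * S p)%nat with (S (S (2 * p))) by lia. cbn [Cpow]. rewrite IHp.
    apply Ceq; unfold Cmul, Rsqr; simpl; ring.
Qed.

Lemma Cpow_odd th p : Cpow (mkC 0 th) (S (2 * p)) = mkC 0 (th * ((-1) ^ p * (Rsqr th) ^ p)).
Proof. cbn [Cpow]. rewrite Cpow_even. apply Ceq; unfold Cmul; simpl; ring. Qed.

Definition CSum th p := sum_f_R0 (fun i => cos_n i * (Rsqr th) ^ i) p.
Definition SSum th p := sum_f_R0 (fun i => sin_n i * (Rsqr th) ^ i) p.

Lemma expS_odd th p : expS (mkC 0 th) (S (2 * p)) = mkC (CSum th p) (th * SSum th p).
Proof.
  induction p.
  - apply Ceq; simpl; unfold CSum, SSum, cos_n, sin_n; simpl; field.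
  - replace (S (2 * S p)) with (S (S (S (2 * p)))) by lia.
    change (expS (mkC 0 th) (S (S (S (2 * p))))) with
      (Cadd (Cadd (expS (mkC 0 th) (S (2 * p))) (Cmul (RtoC (/ INR (fact (S (S (2 * p)))))) (Cpow (mkC 0 th) (S (S (2 * p))))))
            (Cmul (RtoC (/ INR (fact (S (S (S (2 * p))))))) (Cpow (mkC 0 th) (S (S (S (2 * p))))))).
    rewrite IHp.
    replace (S (S (2 * p))) with (2 * S p)%nat by lia. rewrite Cpow_even.
    replace (S (S (S (2 * p)))) with (S (2 * S p))%nat by lia. rewrite Cpow_odd.
    unfold CSum, SSum. simpl sum_f_R0. unfold cos_n, sin_n.
    replace (2 * S p + 1)%nat with (S (2 * S p)) by lia.
    apply Ceq; unfold Cmul, Cadd, RtoC; simpl re; simpl im; unfold Rdiv; ring.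
Qed.

Lemma expS_even th p : expS (mkC 0 th) (S (S (2 * p))) = mkC (CSum th (S p)) (th * SSum th p).
Proof.
  change (expS (mkC 0 th) (S (S (2 * p)))) with
    (Cadd (expS (mkC 0 th) (S (2 * p))) (Cmul (RtoC (/ INR (fact (S (S (2 * p)))))) (Cpow (mkC 0 th) (S (S (2 * p)))))).
  rewrite expS_odd. replace (S (S (2 * p))) with (2 * S p)%nat by lia. rewrite Cpow_even.
  unfold CSum. simpl sum_f_R0. unfold cos_n.
  apply Ceq; unfold Cmul, Cadd, RtoC; simpl re; simpl im; unfold Rdiv; ring.
Qed.

Lemma re_expS th n : re (expS (mkC 0 th) n) = CSum th (Nat.div2 n).
Proof.
  destruct (Nat.Even_or_Odd n) as [[p ->]|[p ->]].
  - destruct p. simpl. unfold CSum; simpl; unfold cos_n; simpl; field.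
    replace (2 * S p)%nat with (S (S (2 * p))) by lia. rewrite expS_even. simpl re.
    f_equal. replace (S (S (2 * p))) with (2 * S p)%nat by lia. rewrite Nat.div2_double. auto.
  - replace (2 * p + 1)%nat with (S (2 * p)) by lia. rewrite expS_odd. simpl re.
    rewrite Nat.div2_succ_double. auto.
Qed.

Lemma im_expS th n : (1 <= n)%nat -> im (expS (mkC 0 th) n) = th * SSum th (Nat.div2 (pred n)).
Proof.
  intros Hn. destruct (Nat.Even_or_Odd n) as [[p ->]|[p ->]].
  - destruct p. lia.
    replace (2 * S p)%nat with (S (S (2 * p))) by lia. rewrite expS_even. simpl im.
    rewrite Nat.pred_succ, Nat.div2_succ_double. auto.
  - replace (2 * p + 1)%nat with (S (2 * p)) by lia. rewrite expS_odd. simpl im.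
    rewrite Nat.pred_succ, Nat.div2_double. auto.
Qed.

Lemma cv_div2 u l : Un_cv u l -> Un_cv (fun n => u (Nat.div2 n)) l.
Proof.
  intros H e He. destruct (H e He) as [K HK]. exists (2 * K)%nat. intros n Hn. apply HK.
  pose proof (Nat.div2_odd n). destruct (Nat.odd n); simpl in H0; lia.
Qed.

Lemma cv_eventually u v l K : (forall n, (K <= n)%nat -> u n = v n) -> Un_cv v l -> Un_cv u l.
Proof.
  intros E H e He. destruct (H e He) as [K' HK]. exists (max K K'). intros n Hn.
  rewrite E by lia. apply HK; lia.
Qed.

Lemma expS_cv th : Ccv (expS (mkC 0 th)) (cis th).
Proof.
  split; simpl.
  - apply (Un_cv_ext (fun n => CSum th (Nat.div2 n))). intros; symmetry; apply re_expS.
    unfold cos. destruct (exist_cos (Rsqr th)) as [a Ha]. exact (cv_div2 (CSum th) a Ha).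
  - apply (cv_eventually _ (fun n => th * SSum th (Nat.div2 (pred n))) _ 1%nat).
    intros; apply im_expS; auto.
    unfold sin. destruct (exist_sin (Rsqr th)) as [a Ha].
    apply CV_mult. apply CV_const.
    intros e He. destruct (cv_div2 (SSum th) a Ha e He) as [K HK]. exists (S K). intros n Hn.
    apply HK. lia.
Qed.

Lemma dpl_ext f g x l : (forall t, f t = g t) -> derivable_pt_lim f x l -> derivable_pt_lim g x l.
Proof. intros E H e He. destruct (H e He) as [d Hd]. exists d. intros h Hh Hh'. rewrite <- !E. auto. Qed.

Lemma dpl_eq f x l l' : l = l' -> derivable_pt_lim f x l -> derivable_pt_lim f x l'.
Proof. intros ->; auto. Qed.

Lemma dpl_cont f x l : derivable_pt_lim f x l -> continuity_pt f x.
Proof. intros H. apply derivable_continuous_pt. exists l. exact H. Qed.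

Lemma dpl_lin w x : derivable_pt_lim (fun t => w * t) x w.
Proof. apply (dpl_eq _ _ (w * 1)); [ring|]. apply (derivable_pt_lim_scal id w x 1), derivable_pt_lim_id. Qed.

Lemma dpl_const c x : derivable_pt_lim (fun _ => c) x 0.
Proof. apply (derivable_pt_lim_const c x). Qed.

Lemma dpl_sinw w x : derivable_pt_lim (fun t => sin (w * t)) x (w * cos (w * x)).
Proof.
  apply (dpl_eq _ _ (cos (w * x) * w)); [ring|].
  apply (dpl_ext (comp sin (fun t => w * t))); [reflexivity|].
  apply derivable_pt_lim_comp. apply dpl_lin. apply derivable_pt_lim_sin.
Qed.

Lemma dpl_cosw w x : derivable_pt_lim (fun t => cos (w * t)) x (- w * sin (w * x)).
Proof.
  apply (dpl_eq _ _ (- sin (w * x) * w)); [ring|].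
  apply (dpl_ext (comp cos (fun t => w * t))); [reflexivity|].
  apply derivable_pt_lim_comp. apply dpl_lin. apply derivable_pt_lim_cos.
Qed.

Lemma dpl_add f g x l1 l2 : derivable_pt_lim f x l1 -> derivable_pt_lim g x l2 ->
  derivable_pt_lim (fun t => f t + g t) x (l1 + l2).
Proof. intros. apply (dpl_ext (plus_fct f g)); [reflexivity|]. apply derivable_pt_lim_plus; auto. Qed.

Lemma dpl_scal c f x l : derivable_pt_lim f x l -> derivable_pt_lim (fun t => c * f t) x (c * l).
Proof. intros. apply (dpl_ext (mult_real_fct c f)); [reflexivity|]. apply derivable_pt_lim_scal; auto. Qed.

Definition trig (a b w t : R) := a * cos (w * t) + b * sin (w * t).
Definition trigF (a b w t : R) :=
  if Req_EM_T w 0 then a * t else / w * (a * sin (w * t) + (- b) * cos (w * t)).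

Lemma trig_deriv a b w x : derivable_pt_lim (trig a b w) x (- a * w * sin (w * x) + b * w * cos (w * x)).
Proof.
  unfold trig. apply (dpl_eq _ _ (a * (- w * sin (w * x)) + b * (w * cos (w * x)))); [ring|].
  apply dpl_add; apply dpl_scal; [apply dpl_cosw | apply dpl_sinw].
Qed.

Lemma trig_cont a b w x : continuity_pt (trig a b w) x.
Proof. eapply dpl_cont, trig_deriv. Qed.

Lemma trigF_deriv a b w x : derivable_pt_lim (trigF a b w) x (trig a b w x).
Proof.
  unfold trigF, trig. destruct (Req_EM_T w 0) as [->|Hw].
  - apply (dpl_eq _ _ (a * 1)). rewrite Rmult_0_l, cos_0, sin_0; ring.
    apply dpl_scal. apply (dpl_ext id); [reflexivity|]. apply derivable_pt_lim_id.
  - apply (dpl_eq _ _ (/ w * (a * (w * cos (w * x)) + - b * (- w * sin (w * x))))).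
    field; auto.
    apply dpl_scal. apply dpl_add; apply dpl_scal; [apply dpl_sinw | apply dpl_cosw].
Qed.

Lemma trigF_diff a b w T : trigF a b w T - trigF a b w (- T) =
  if Req_EM_T w 0 then 2 * a * T else 2 * a * sin (w * T) / w.
Proof.
  unfold trigF. destruct (Req_EM_T w 0); [ring|].
  replace (w * - T) with (- (w * T)) by ring. rewrite sin_neg, cos_neg. field; auto.
Qed.

Lemma dpl_rsum n (F f : nat -> R -> R) x :
  (forall p, (p < n)%nat -> derivable_pt_lim (F p) x (f p x)) ->
  derivable_pt_lim (fun t => rsum n (fun p => F p t)) x (rsum n (fun p => f p x)).
Proof.
  induction n; intros H; simpl.
  - apply (dpl_const 0).
  - apply dpl_add. apply IHn; intros; apply H; lia. apply H; lia.
Qed.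

Lemma cont_rsum n (f : nat -> R -> R) x :
  (forall p, (p < n)%nat -> continuity_pt (f p) x) ->
  continuity_pt (fun t => rsum n (fun p => f p t)) x.
Proof.
  induction n; intros H; simpl.
  - apply continuity_pt_const. intros a b; reflexivity.
  - apply (continuity_pt_plus (fun t => rsum n (fun p => f p t)) (f n)). apply IHn; intros; apply H; lia. apply H; lia.
Qed.

Lemma FTC_gen f F a b : a <= b ->
  (forall x, a <= x <= b -> derivable_pt_lim F x (f x)) ->
  (forall x, a <= x <= b -> continuity_pt f x) ->
  forall pr : Riemann_integrable f a b, RiemannInt pr = F b - F a.
Proof.
  intros H Hd H0 pr.
  rewrite (RiemannInt_P20 H (FTC_P1 H H0) pr).
  assert (H1 := RiemannInt_P29 H H0).
  assert (H2 : antiderivative f F a b).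
  { split; auto. intros x Hx. exists (exist _ (f x) (Hd x Hx)). symmetry. apply derive_pt_eq_0. apply Hd; auto. }
  destruct (antiderivative_Ucte f _ _ _ _ H1 H2) as [c Hc].
  rewrite !Hc; [ring| split; lra | split; lra].
Qed.

Lemma Rint_spec f a b v : (exists pr : Riemann_integrable f a b, RiemannInt pr = v) -> Rint f a b = v.
Proof.
  intros [pr Hpr]. unfold Rint.
  pose proof (epsilon_spec (inhabits 0) (fun I => exists pr : Riemann_integrable f a b, RiemannInt pr = I)
    (ex_intro _ v (ex_intro _ pr Hpr))) as [pr' Hpr']. simpl in Hpr'.
  rewrite <- Hpr', <- Hpr. apply RiemannInt_P5.
Qed.

Lemma rsum_minus n f g : rsum n f - rsum n g = rsum n (fun k => f k - g k).
Proof. induction n; simpl; [ring|]. rewrite <- IHn; ring. Qed.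

Definition tsum (n : nat) (al be om : nat -> nat -> R) (t : R) :=
  rsum n (fun k => rsum n (fun l => trig (al k l) (be k l) (om k l) t)).
Definition tsumF (n : nat) (al be om : nat -> nat -> R) (t : R) :=
  rsum n (fun k => rsum n (fun l => trigF (al k l) (be k l) (om k l) t)).

Lemma tsum_cont n al be om x : continuity_pt (tsum n al be om) x.
Proof.
  unfold tsum. apply (cont_rsum n (fun k t => rsum n (fun l => trig (al k l) (be k l) (om k l) t))).
  intros. apply (cont_rsum n (fun l => trig (al p l) (be p l) (om p l))). intros; apply trig_cont.
Qed.

Lemma tsum_deriv n al be om x : derivable_pt_lim (tsumF n al be om) x (tsum n al be om x).
Proof.
  unfold tsum, tsumF. apply (dpl_rsum n (fun k t => rsum n (fun l => trigF (al k l) (be k l) (om k l) t))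
     (fun k t => rsum n (fun l => trig (al k l) (be k l) (om k l) t))).
  intros. apply (dpl_rsum n (fun l => trigF (al p l) (be p l) (om p l)) (fun l => trig (al p l) (be p l) (om p l))).
  intros; apply trigF_deriv.
Qed.

Lemma tsum_int n al be om T : 0 < T -> Riemann_integrable (tsum n al be om) (- T) T.
Proof. intros. apply continuity_implies_RiemannInt. lra. intros; apply tsum_cont. Qed.

Lemma tsum_Rint n al be om T : 0 < T ->
  Rint (tsum n al be om) (- T) T =
  rsum n (fun k => rsum n (fun l => if Req_EM_T (om k l) 0 then 2 * al k l * T else 2 * al k l * sin (om k l * T) / om k l)).
Proof.
  intros HT. apply Rint_spec. exists (tsum_int n al be om T HT).
  rewrite (FTC_gen _ (tsumF n al be om)); [| lra | intros; apply tsum_deriv | intros; apply tsum_cont].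
  unfold tsumF. rewrite rsum_minus.
  apply rsum_ext; intros k Hk. rewrite rsum_minus.
  apply rsum_ext; intros l Hl. rewrite <- (trigF_diff (al k l) (be k l) (om k l) T). ring.
Qed.

Lemma rsum_div n f c : rsum n f / c = rsum n (fun k => f k / c).
Proof. induction n; simpl. unfold Rdiv; ring. rewrite <- IHn. unfold Rdiv; ring. Qed.

Lemma rsum_avg_bound n f g h c : 0 < c -> (forall k, (k < n)%nat -> Rabs (f k / c - g k) <= h k) ->
  Rabs (rsum n f / c - rsum n g) <= rsum n h.
Proof.
  intros Hc; induction n; intros H; simpl.
  - unfold Rdiv; rewrite Rmult_0_l, Rminus_0_r, Rabs_R0; lra.
  - replace ((rsum n f + f n) / c - (rsum n g + g n)) with ((rsum n f / c - rsum n g) + (f n / c - g n)) by (field; lra).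
    eapply Rle_trans. apply Rabs_triang. apply Rplus_le_compat. apply IHn; intros; apply H; lia. apply H; lia.
Qed.

Lemma term_bound a w T : 0 < T ->
  Rabs ((if Req_EM_T w 0 then 2 * a * T else 2 * a * sin (w * T) / w) / (2 * T) - (if Req_EM_T w 0 then a else 0))
  <= (if Req_EM_T w 0 then 0 else Rabs a / Rabs w) / T.
Proof.
  intros HT. destruct (Req_EM_T w 0).
  - replace (2 * a * T / (2 * T) - a) with 0 by (field; lra). rewrite Rabs_R0. unfold Rdiv; lra.
  - replace (2 * a * sin (w * T) / w / (2 * T) - 0) with ((a / w) * (sin (w * T) / T)) by (field; lra).
    rewrite Rabs_mult. unfold Rdiv. rewrite Rabs_mult, Rabs_mult, Rabs_inv, Rabs_inv.
    rewrite (Rabs_right T) by lra.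
    pose proof (SIN_bound (w * T)). assert (Rabs (sin (w * T)) <= 1) by (apply Rabs_le; lra).
    assert (0 < Rabs w) by (apply Rabs_pos_lt; auto).
    assert (0 < / Rabs w) by (apply Rinv_0_lt_compat; auto).
    assert (0 < / T) by (apply Rinv_0_lt_compat; auto).
    pose proof (Rabs_pos a). pose proof (Rabs_pos (sin (w * T))).
    replace (Rabs a * / Rabs w * / T) with (Rabs a * / Rabs w * (1 * / T)) by ring.
    apply Rmult_le_compat_l. nra. apply Rmult_le_compat_r; lra.
Qed.

Lemma tsum_avg n al be om T : 0 < T ->
  Rabs (Rint (tsum n al be om) (- T) T / (2 * T) -
        rsum n (fun k => rsum n (fun l => if Req_EM_T (om k l) 0 then al k l else 0)))
  <= rsum n (fun k => rsum n (fun l => if Req_EM_T (om k l) 0 then 0 else Rabs (al k l) / Rabs (om k l))) / T.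
Proof.
  intros HT. rewrite tsum_Rint by auto. rewrite (rsum_div n _ T).
  apply rsum_avg_bound. lra. intros k Hk. rewrite (rsum_div n _ T).
  apply rsum_avg_bound. lra. intros l Hl. apply term_bound; auto.
Qed.

Lemma cis_mul a b : Cmul (cis a) (cis b) = cis (a + b).
Proof. apply Ceq; simpl; [rewrite cos_plus | rewrite sin_plus]; ring. Qed.

Section Final.
Variables (N : nat) (G A B : Mat) (CA : R).
Hypothesis HG : hpd N G.
Hypothesis HA : meq N (mmul N G A) (mmul N (madj A) G).
Hypothesis HnA : Gopnorm_le N G A CA.
Variables (vs : nat -> Vec) (lam : nat -> R).
Hypothesis Hon : orthonormal N G N vs.
Hypothesis Hev : forall j, (j < N)%nat -> forall i, (i < N)%nat -> mvec N A (vs j) i = Cmul (RtoC (lam j)) (vs j i).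

Definition uu k j := Cconj (mvec N G (vs k) j).
Definition gg k i := mvec N G (vs k) i.
Definition hh k j := Cconj (vs k j).
Definition bb k l := dot N (vs k) (mvec N (mmul N G B) (vs l)).
Definition cc i j k l := Cmul (gg k i) (Cmul (bb k l) (uu l j)).
Definition om k l := lam k - lam l.

Lemma compl1 i j : (i < N)%nat -> (j < N)%nat -> mid i j = csum N (fun k => Cmul (vs k i) (uu k j)).
Proof.
  intros Hi Hj. rewrite (completeness N G HG vs Hon (fun l => mid l j) i Hi).
  apply csum_ext; intros k Hk. f_equal. unfold ip, uu.
  rewrite (csum_ext N _ (fun l => Cmul (Cconj (vs k l)) (G l j))).
  2:{ intros l Hl. f_equal. unfold mvec, mid.
      rewrite (csum_ext N _ (fun m => if Nat.eqb m j then G l m else C0)).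
      apply csum_delta'; auto. intros m Hm. destruct (Nat.eqb m j); cring. }
  unfold mvec. rewrite csum_conj. apply csum_ext; intros l Hl.
  rewrite (proj1 HG j l) by auto. unfold madj. cring.
Qed.

Lemma compl2 i j : (i < N)%nat -> (j < N)%nat -> mid i j = csum N (fun k => Cmul (gg k i) (hh k j)).
Proof.
  intros Hi Hj. transitivity (Cconj (mid j i)).
  { unfold mid. destruct (Nat.eqb_spec i j); destruct (Nat.eqb_spec j i); try lia; cring. }
  rewrite compl1 by auto. rewrite csum_conj. apply csum_ext; intros k Hk. unfold uu, gg, hh. cring.
Qed.

Lemma eig1 t k i : (k < N)%nat -> (i < N)%nat ->
  mvec N (mscale (mkC 0 (- t)) A) (vs k) i = Cmul (mkC 0 (- t * lam k)) (vs k i).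
Proof. intros. rewrite mvec_mscale, Hev by auto. cring. Qed.

Lemma eig2 t k i : (k < N)%nat -> (i < N)%nat ->
  mvec N (mscale (mkC 0 t) (madj A)) (gg k) i = Cmul (mkC 0 (t * lam k)) (gg k i).
Proof.
  intros Hk Hi. rewrite mvec_mscale. unfold gg.
  rewrite (mvec_ext N (madj A) (fun i => mvec N G (vs k) i) (mvec N G (vs k))) by auto.
  rewrite <- mvec_mmul. rewrite (mvec_mext N _ (mmul N G A)) by (intros; symmetry; apply HA; auto).
  rewrite mvec_mmul. rewrite (mvec_ext N G _ (vscale (RtoC (lam k)) (vs k))) by (intros; apply Hev; auto).
  rewrite mvec_vscale. cring.
Qed.

Lemma E1_spec t i l : (i < N)%nat -> (l < N)%nat ->
  mexp N (mscale (mkC 0 t) (madj A)) i l = csum N (fun k => Cmul (cis (t * lam k)) (Cmul (gg k i) (hh k l))).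
Proof.
  intros. apply (mexp_spec N _ gg hh (fun k => mkC 0 (t * lam k))); auto.
  - intros; apply compl2; auto.
  - intros; apply eig2; auto.
  - intros; apply expS_cv.
Qed.

Lemma E2_spec t m j : (m < N)%nat -> (j < N)%nat ->
  mexp N (mscale (mkC 0 (- t)) A) m j = csum N (fun k => Cmul (cis (- t * lam k)) (Cmul (vs k m) (uu k j))).
Proof.
  intros. apply (mexp_spec N _ vs uu (fun k => mkC 0 (- t * lam k))); auto.
  - intros; apply compl1; auto.
  - intros; apply eig1; auto.
  - intros; apply expS_cv.
Qed.

Lemma integrand_spec t i j : (i < N)%nat -> (j < N)%nat ->
  integrand N G A B t i j = csum N (fun k => csum N (fun l => Cmul (cis (om k l * t)) (cc i j k l))).
Proof.
  intros Hi Hj. unfold integrand, mmul at 1.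
  set (GB := mmul N G B).
  assert (H2 : forall l, (l < N)%nat -> mmul N GB (mexp N (mscale (mkC 0 (- t)) A)) l j =
     csum N (fun k' => Cmul (cis (- t * lam k')) (Cmul (uu k' j) (mvec N GB (vs k') l)))).
  { intros l Hl. unfold mmul at 1.
    rewrite (csum_ext N _ (fun m => csum N (fun k' => Cmul (Cmul (cis (- t * lam k')) (uu k' j)) (Cmul (GB l m) (vs k' m))))).
    2:{ intros m Hm. rewrite E2_spec by auto. rewrite csum_mull. apply csum_ext; intros; cring. }
    rewrite csum_swap. apply csum_ext; intros k' Hk'. rewrite <- csum_mull. unfold mvec. cring. }
  rewrite (csum_ext N _ (fun l => csum N (fun k => csum N (fun k' =>
      Cmul (Cmul (cis (t * lam k)) (cis (- t * lam k'))) (Cmul (Cmul (gg k i) (uu k' j)) (Cmul (hh k l) (mvec N GB (vs k') l))))))).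
  2:{ intros l Hl. rewrite E1_spec, H2 by auto. rewrite csum_mulr. apply csum_ext; intros k Hk.
      rewrite csum_mull. apply csum_ext; intros; cring. }
  rewrite csum_swap. apply csum_ext; intros k Hk.
  rewrite csum_swap. apply csum_ext; intros l Hl.
  unfold cc, bb, om, dot, hh.
  rewrite <- csum_mull. rewrite <- csum_mull. rewrite cis_mul.
  replace (t * lam k + - t * lam l) with ((lam k - lam l) * t) by ring. unfold GB. cring.
Qed.


Definition cl k l : C := if Req_EM_T (om k l) 0 then C1 else C0.
Definition LL : Mat := fun i j => csum N (fun k => csum N (fun l => Cmul (cl k l) (cc i j k l))).

Lemma re_int i j : (i < N)%nat -> (j < N)%nat ->
  (fun t => re (integrand N G A B t i j)) = tsum N (fun k l => re (cc i j k l)) (fun k l => - im (cc i j k l)) om.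
Proof.
  intros Hi Hj. apply functional_extensionality; intros t. rewrite integrand_spec by auto.
  rewrite re_csum. unfold tsum. apply rsum_ext; intros k Hk. rewrite re_csum. apply rsum_ext; intros l Hl.
  unfold trig. simpl. ring.
Qed.

Lemma im_int i j : (i < N)%nat -> (j < N)%nat ->
  (fun t => im (integrand N G A B t i j)) = tsum N (fun k l => im (cc i j k l)) (fun k l => re (cc i j k l)) om.
Proof.
  intros Hi Hj. apply functional_extensionality; intros t. rewrite integrand_spec by auto.
  rewrite im_csum. unfold tsum. apply rsum_ext; intros k Hk. rewrite im_csum. apply rsum_ext; intros l Hl.
  unfold trig. simpl. ring.
Qed.

Lemma re_LL i j : re (LL i j) = rsum N (fun k => rsum N (fun l => if Req_EM_T (om k l) 0 then re (cc i j k l) else 0)).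
Proof.
  unfold LL. rewrite re_csum. apply rsum_ext; intros k Hk. rewrite re_csum. apply rsum_ext; intros l Hl.
  unfold cl. destruct (Req_EM_T (om k l) 0); simpl; ring.
Qed.
Lemma im_LL i j : im (LL i j) = rsum N (fun k => rsum N (fun l => if Req_EM_T (om k l) 0 then im (cc i j k l) else 0)).
Proof.
  unfold LL. rewrite im_csum. apply rsum_ext; intros k Hk. rewrite im_csum. apply rsum_ext; intros l Hl.
  unfold cl. destruct (Req_EM_T (om k l) 0); simpl; ring.
Qed.

Definition Dbound (f : nat -> nat -> R) :=
  rsum N (fun k => rsum N (fun l => if Req_EM_T (om k l) 0 then 0 else Rabs (f k l) / Rabs (om k l))).

Lemma Dbound_nonneg f : 0 <= Dbound f.
Proof.
  apply rsum_nonneg; intros k Hk. apply rsum_nonneg; intros l Hl.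
  destruct (Req_EM_T (om k l) 0); [lra|]. apply Rmult_le_pos. apply Rabs_pos.
  apply Rlt_le, Rinv_0_lt_compat, Rabs_pos_lt; auto.
Qed.

Lemma LL_avg : time_average_is N (integrand N G A B) LL.
Proof.
  split.
  - intros T HT i j Hi Hj. rewrite re_int, im_int by auto. split; constructor; apply tsum_int; auto.
  - intros eps Heps.
    set (Dre := fun i j => Dbound (fun k l => re (cc i j k l))).
    set (Dim := fun i j => Dbound (fun k l => im (cc i j k l))).
    set (Dtot := rsum N (fun i => rsum N (fun j => Dre i j + Dim i j))).
    assert (Hnn : forall a b, 0 <= Dre a b + Dim a b).
    { intros a b; unfold Dre, Dim; pose proof (Dbound_nonneg (fun k l => re (cc a b k l)));
      pose proof (Dbound_nonneg (fun k l => im (cc a b k l))); lra. }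
    assert (HDij : forall i j, (i < N)%nat -> (j < N)%nat -> Dre i j + Dim i j <= Dtot).
    { intros i j Hi Hj. unfold Dtot.
      apply Rle_trans with (rsum N (fun j => Dre i j + Dim i j)).
      apply (rsum_pos_single N (fun j => Dre i j + Dim i j)); auto.
      apply (rsum_pos_single N (fun i => rsum N (fun j => Dre i j + Dim i j))); auto.
      intros a Ha; apply rsum_nonneg; intros b Hb; auto. }
    assert (HD0 : 0 <= Dtot).
    { apply rsum_nonneg; intros a Ha; apply rsum_nonneg; intros b Hb; auto. }
    exists (Dtot / eps + 1). split.
    { assert (0 <= Dtot / eps) by (apply Rmult_le_pos; auto; apply Rlt_le, Rinv_0_lt_compat; auto). lra. }
    intros T HT i j Hi Hj.
    assert (HT0 : 0 < T). { assert (0 <= Dtot / eps) by (apply Rmult_le_pos; auto; apply Rlt_le, Rinv_0_lt_compat; auto). lra. }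
    assert (Hlt : Dtot / T < eps).
    { apply (Rmult_lt_reg_r T); auto. unfold Rdiv. rewrite Rmult_assoc, Rinv_l, Rmult_1_r by lra.
      assert (Dtot / eps < T) by lra. apply (Rmult_lt_compat_r eps) in H; auto.
      unfold Rdiv in H. rewrite Rmult_assoc, Rinv_l, Rmult_1_r in H by lra. lra. }
    pose proof (HDij i j Hi Hj) as Hij.
    assert (Hre0 : 0 <= Dre i j) by apply Dbound_nonneg.
    assert (Him0 : 0 <= Dim i j) by apply Dbound_nonneg.
    assert (Hdiv : forall x, x <= Dtot -> x / T <= Dtot / T).
    { intros x Hx. unfold Rdiv. apply Rmult_le_compat_r; auto. apply Rlt_le, Rinv_0_lt_compat; auto. }
    split.
    + rewrite re_int, re_LL by auto. eapply Rle_lt_trans. apply tsum_avg; auto.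
      eapply Rle_lt_trans; [|exact Hlt]. apply Hdiv. fold (Dbound (fun k l => re (cc i j k l))). fold (Dre i j). lra.
    + rewrite im_int, im_LL by auto. eapply Rle_lt_trans. apply tsum_avg; auto.
      eapply Rle_lt_trans; [|exact Hlt]. apply Hdiv. fold (Dbound (fun k l => im (cc i j k l))). fold (Dim i j). lra.
Qed.

End Final.

Lemma quad_mext N M1 M2 x : (forall i j, (i < N)%nat -> (j < N)%nat -> M1 i j = M2 i j) -> quad N M1 x = quad N M2 x.
Proof. intros H. unfold quad. apply csum_ext; intros i Hi. f_equal. apply mvec_mext; auto. Qed.

Lemma quad_vext N M x y : (forall i, (i < N)%nat -> x i = y i) -> quad N M x = quad N M y.
Proof. intros H. rewrite !quad_ip. apply ip_ext; auto. Qed.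

Lemma ip_csum_l N G w m (c : nat -> C) (u : nat -> Vec) :
  ip N G (fun i => csum m (fun k => Cmul (c k) (u k i))) w = csum m (fun k => Cmul (Cconj (c k)) (ip N G (u k) w)).
Proof.
  induction m.
  - apply ip_zero_l. intros; reflexivity.
  - rewrite csum_S. rewrite <- IHm. rewrite <- ip_vscale_l, <- ip_vadd_l.
    apply ip_ext; auto. intros; unfold vadd, vscale; rewrite csum_S; reflexivity.
Qed.

Lemma mvec_csum N M m (c : nat -> C) (u : nat -> Vec) i :
  mvec N M (fun i => csum m (fun k => Cmul (c k) (u k i))) i = csum m (fun k => Cmul (c k) (mvec N M (u k) i)).
Proof.
  induction m.
  - apply mvec_zero. intros; reflexivity.
  - rewrite csum_S, <- IHm, <- mvec_vscale, <- mvec_vadd. apply mvec_ext. intros; unfold vadd, vscale; rewrite csum_S; reflexivity.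
Qed.

Lemma quad_expand N M m (a : nat -> C) (u : nat -> Vec) :
  quad N M (fun i => csum m (fun k => Cmul (a k) (u k i))) =
  csum m (fun k => csum m (fun l => Cmul (Cmul (Cconj (a k)) (a l)) (ip N M (u k) (u l)))).
Proof.
  rewrite quad_ip, ip_csum_l. apply csum_ext; intros k Hk. rewrite ip_csum_r, csum_mull.
  apply csum_ext; intros; cring.
Qed.

Section Pos.
Variables (N : nat) (G A B : Mat) (CA : R).
Hypothesis HG : hpd N G.
Hypothesis HA : meq N (mmul N G A) (mmul N (madj A) G).
Variables (vs : nat -> Vec) (lam : nat -> R).
Hypothesis Hon : orthonormal N G N vs.
Hypothesis Hev : forall j, (j < N)%nat -> forall i, (i < N)%nat -> mvec N A (vs j) i = Cmul (RtoC (lam j)) (vs j i).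

Definition xi (x : Vec) k := ip N G (vs k) x.

Lemma xi_u x k : csum N (fun j => Cmul (uu N G vs k j) (x j)) = xi x k.
Proof.
  unfold uu, xi. rewrite ip_dot. fold (dot N (mvec N G (vs k)) x).
  rewrite <- dot_madj. apply dot_ext; auto. intros j Hj. apply mvec_mext. intros l Hl.
  symmetry; apply (proj1 HG); auto.
Qed.

Lemma xi_g x k : csum N (fun i => Cmul (Cconj (x i)) (gg N G vs k i)) = Cconj (xi x k).
Proof.
  rewrite <- xi_u, csum_conj. apply csum_ext; intros. unfold uu, gg. cring.
Qed.

Lemma LL_quad x : quad N (LL N G B vs lam) x =
  csum N (fun k => csum N (fun l => Cmul (cl lam k l) (Cmul (Cconj (xi x k)) (Cmul (bb N G B vs k l) (xi x l))))).
Proof.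
  assert (Hm : forall i, mvec N (LL N G B vs lam) x i =
     csum N (fun k => csum N (fun l => Cmul (Cmul (cl lam k l) (Cmul (gg N G vs k i) (bb N G B vs k l))) (xi x l)))).
  { intros i. unfold mvec, LL.
    rewrite (csum_ext N _ (fun j => csum N (fun k => csum N (fun l =>
       Cmul (Cmul (cl lam k l) (Cmul (gg N G vs k i) (bb N G B vs k l))) (Cmul (uu N G vs l j) (x j)))))).
    2:{ intros j Hj. rewrite csum_mulr. apply csum_ext; intros. rewrite csum_mulr. apply csum_ext; intros. unfold cc; cring. }
    rewrite csum_swap. apply csum_ext; intros k Hk. rewrite csum_swap. apply csum_ext; intros l Hl.
    rewrite <- csum_mull, xi_u. reflexivity. }
  unfold quad. rewrite (csum_ext N _ (fun i => csum N (fun k => csum N (fun l =>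
       Cmul (Cmul (cl lam k l) (Cmul (bb N G B vs k l) (xi x l))) (Cmul (Cconj (x i)) (gg N G vs k i)))))).
  2:{ intros i Hi. rewrite Hm, csum_mull. apply csum_ext; intros. rewrite csum_mull. apply csum_ext; intros. cring. }
  rewrite csum_swap. apply csum_ext; intros k Hk. rewrite csum_swap. apply csum_ext; intros l Hl.
  rewrite <- csum_mull, xi_g. cring.
Qed.

Lemma parseval x : quad N G x = csum N (fun k => Cmul (Cconj (xi x k)) (xi x k)).
Proof.
  rewrite quad_ip.
  rewrite (ip_ext N G x x x (fun i => csum N (fun k => Cmul (xi x k) (vs k i)))); auto.
  2:{ intros i Hi. rewrite (completeness N G HG vs Hon x i Hi). apply csum_ext; intros; unfold xi; cring. }
  rewrite ip_csum_r. apply csum_ext; intros k Hk. unfold xi. rewrite <- (herm_ip_conj N G (vs k) x (proj1 HG)). cring.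
Qed.

End Pos.

Definition first (lam : nat -> R) r := forall j, (j < r)%nat -> lam j <> lam r.
Definition fr lam r : C := if excluded_middle_informative (first lam r) then C1 else C0.

Lemma rep_exists lam k : exists r0, (r0 <= k)%nat /\ lam r0 = lam k /\ first lam r0.
Proof.
  induction k as [k IH] using lt_wf_ind.
  destruct (classic (first lam k)) as [Hf|Hf].
  - exists k; auto.
  - unfold first in Hf. apply not_all_ex_not in Hf. destruct Hf as [j Hj].
    apply imply_to_and in Hj. destruct Hj as [Hjk Hj]. apply NNPP in Hj.
    destruct (IH j Hjk) as [r0 [H1 [H2 H3]]]. exists r0. split; [lia|]. split; auto. congruence.
Qed.

Lemma rep_unique lam r r0 : first lam r -> first lam r0 -> lam r = lam r0 -> r = r0.
Proof.
  intros H1 H2 E. destruct (lt_eq_lt_dec r r0) as [[Hlt|]|Hlt]; auto.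
  - exfalso; apply (H2 r Hlt E).
  - exfalso; apply (H1 r0 Hlt); auto.
Qed.

Lemma cl_true lam k l : lam k = lam l -> cl lam k l = C1.
Proof. intros E. unfold cl, om. destruct (Req_EM_T (lam k - lam l) 0); auto. exfalso; lra. Qed.
Lemma cl_false lam k l : lam k <> lam l -> cl lam k l = C0.
Proof. intros E. unfold cl, om. destruct (Req_EM_T (lam k - lam l) 0); auto. exfalso; apply E; lra. Qed.
Lemma cl_cases lam k l : (lam k = lam l /\ cl lam k l = C1) \/ (lam k <> lam l /\ cl lam k l = C0).
Proof. destruct (Req_dec (lam k) (lam l)); [left; split; auto; apply cl_true | right; split; auto; apply cl_false]; auto. Qed.

Lemma counting N lam k l : (k < N)%nat -> (l < N)%nat ->
  csum N (fun r => Cmul (fr lam r) (Cmul (cl lam r k) (cl lam r l))) = cl lam k l.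
Proof.
  intros Hk Hl. destruct (Req_dec (lam k) (lam l)) as [E|E].
  - destruct (rep_exists lam k) as [r0 [Hr0 [Er0 Fr0]]]. rewrite cl_true by auto.
    transitivity (csum N (fun r => if Nat.eqb r0 r then (fun _ => C1) r else C0)).
    2:{ apply csum_delta; lia. }
    apply csum_ext; intros r Hr. destruct (Nat.eqb_spec r0 r).
    + subst. unfold fr. destruct (excluded_middle_informative (first lam r)); [|contradiction].
      rewrite !cl_true by congruence. cring.
    + unfold fr. destruct (excluded_middle_informative (first lam r)) as [Fr|Fr]; [|cring].
      destruct (Req_dec (lam r) (lam k)) as [E2|E2].
      * exfalso. apply n. symmetry. apply (rep_unique lam); auto. congruence.
      * rewrite (cl_false lam r k) by auto. cring.
  - rewrite (cl_false lam k l) by auto. apply csum_zero; intros r Hr.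
    destruct (cl_cases lam r k) as [[E1 ->]|[E1 ->]]; [|cring].
    destruct (cl_cases lam r l) as [[E2 ->]|[E2 ->]]; [|cring].
    exfalso; apply E; congruence.
Qed.

Lemma Cconj_cl lam k l : Cconj (cl lam k l) = cl lam k l.
Proof. destruct (cl_cases lam k l) as [[_ ->]|[_ ->]]; cring. Qed.

Lemma Cconj_fr lam r : Cconj (fr lam r) = fr lam r.
Proof. unfold fr. destruct (excluded_middle_informative (first lam r)); cring. Qed.

Section Pos2.
Variables (N : nat) (G A B : Mat) (CA alpha beta : R).
Hypothesis HG : hpd N G.
Hypothesis HA : meq N (mmul N G A) (mmul N (madj A) G).
Variables (vs : nat -> Vec) (lam : nat -> R).
Hypothesis Hon : orthonormal N G N vs.
Hypothesis Hev : forall j, (j < N)%nat -> forall i, (i < N)%nat -> mvec N A (vs j) i = Cmul (RtoC (lam j)) (vs j i).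
Hypothesis Hlam : forall j, (j < N)%nat -> Rabs (lam j) <= CA.
Hypothesis HGB : psd N (mmul N G B).
Hypothesis Halpha : 0 < alpha.
Hypothesis Hbeta : 0 < beta.
Hypothesis Hhyp : mge N (madd (mmul N G B)
                (mscale (RtoC (/ (alpha ^ 2)))
                        (mmul N (mmul N (mmul N (madj A) G) B) A)))
          (mscale (RtoC beta) G).

Definition yv (x : Vec) r : Vec := fun i => csum N (fun l => Cmul (Cmul (cl lam r l) (xi N G vs x l)) (vs l i)).

Lemma yv_eig x r i : (i < N)%nat -> mvec N A (yv x r) i = Cmul (RtoC (lam r)) (yv x r i).
Proof.
  intros Hi. unfold yv. rewrite mvec_csum, csum_mull. apply csum_ext; intros l Hl.
  rewrite Hev by auto. destruct (cl_cases lam r l) as [[E ->]|[E ->]]; [rewrite E|]; cring.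
Qed.

Lemma quad_yv M x r : quad N M (yv x r) =
  csum N (fun k => csum N (fun l => Cmul (Cmul (cl lam r k) (cl lam r l))
     (Cmul (Cconj (xi N G vs x k)) (Cmul (ip N M (vs k) (vs l)) (xi N G vs x l))))).
Proof.
  unfold yv. rewrite quad_expand. apply csum_ext; intros k Hk. apply csum_ext; intros l Hl.
  rewrite Cconj_mul, Cconj_cl. cring.
Qed.

Lemma decomp (M : Mat) (w : nat -> nat -> C) x :
  (forall k l, (k < N)%nat -> (l < N)%nat -> w k l = ip N M (vs k) (vs l)) ->
  csum N (fun k => csum N (fun l => Cmul (cl lam k l) (Cmul (Cconj (xi N G vs x k)) (Cmul (w k l) (xi N G vs x l))))) =
  csum N (fun r => Cmul (fr lam r) (quad N M (yv x r))).
Proof.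
  intros Hw.
  rewrite (csum_ext N _ (fun k => csum N (fun l => csum N (fun r => Cmul (fr lam r) (Cmul (Cmul (cl lam r k) (cl lam r l))
     (Cmul (Cconj (xi N G vs x k)) (Cmul (ip N M (vs k) (vs l)) (xi N G vs x l)))))))).
  2:{ intros k Hk. apply csum_ext; intros l Hl. rewrite <- (counting N lam k l) by auto. rewrite csum_mulr, Hw by auto.
      apply csum_ext; intros; cring. }
  rewrite (csum_ext N _ (fun k => csum N (fun r => csum N (fun l => Cmul (fr lam r) (Cmul (Cmul (cl lam r k) (cl lam r l))
     (Cmul (Cconj (xi N G vs x k)) (Cmul (ip N M (vs k) (vs l)) (xi N G vs x l)))))))).
  2:{ intros; apply csum_swap. }
  rewrite csum_swap. apply csum_ext; intros r Hr. rewrite quad_yv, csum_mull.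
  apply csum_ext; intros k Hk. rewrite csum_mull. apply csum_ext; intros; reflexivity.
Qed.

Lemma re_quad_mscale r M x : re (quad N (mscale (RtoC r) M) x) = r * re (quad N M x) - 0 * im (quad N M x).
Proof. rewrite quad_mscale. reflexivity. Qed.

Definition delta := beta / (1 + CA * CA / (alpha * alpha)).

Lemma delta_pos : 0 < delta.
Proof.
  unfold delta. apply Rdiv_lt_0_compat; auto.
  assert (0 <= CA * CA / (alpha * alpha)). { apply Rmult_le_pos. nra. apply Rlt_le, Rinv_0_lt_compat; nra. }
  lra.
Qed.

Lemma per_r x r : (r < N)%nat -> delta * re (quad N G (yv x r)) <= re (quad N (mmul N G B) (yv x r)).
Proof.
  intros Hr. set (y := yv x r).
  pose proof (proj2 Hhyp y) as H. rewrite quad_msub, quad_madd in H. simpl in H.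
  rewrite !re_quad_mscale in H. rewrite quad_sandwich in H.
  rewrite (quad_vext N _ (mvec N A y) (vscale (RtoC (lam r)) y)) in H by (intros; apply yv_eig; auto).
  rewrite quad_scale in H.
  set (qB := re (quad N (mmul N G B) y)) in *. set (qG := re (quad N G y)) in *.
  assert (HqB : 0 <= qB) by apply (proj2 HGB).
  assert (HqG : 0 <= qG) by (apply hpd_nonneg; auto).
  assert (Hl2 : lam r * lam r <= CA * CA).
  { pose proof (Hlam r Hr). pose proof (Rabs_pos (lam r)).
    assert (Rabs (lam r) * Rabs (lam r) = lam r * lam r) by (rewrite <- Rabs_mult; apply Rabs_right; nra).
    nra. }
  replace (alpha * (alpha * 1)) with (alpha * alpha) in H by ring.
  set (ia := / (alpha * alpha)) in *.
  assert (Hia : 0 < ia) by (apply Rinv_0_lt_compat; nra).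
  assert (Hmain : beta * qG <= (1 + CA * CA * ia) * qB).
  { assert (lam r * lam r * ia * qB <= CA * CA * ia * qB).
    { apply Rmult_le_compat_r; auto. apply Rmult_le_compat_r; lra. }
    nra. }
  unfold delta. unfold Rdiv. fold ia.
  assert (Hd : 0 < 1 + CA * CA * ia) by nra.
  apply (Rmult_le_reg_l (1 + CA * CA * ia)); auto.
  replace ((1 + CA * CA * ia) * (beta * / (1 + CA * CA * ia) * qG)) with (beta * qG) by (field; lra).
  lra.
Qed.


Lemma LL_herm i j : (i < N)%nat -> (j < N)%nat -> LL N G B vs lam i j = Cconj (LL N G B vs lam j i).
Proof.
  intros Hi Hj. unfold LL. rewrite csum_conj.
  rewrite (csum_ext N (fun k => Cconj (csum N (fun l => Cmul (cl lam k l) (cc N G B vs j i k l))))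
    (fun k => csum N (fun l => Cmul (cl lam l k) (Cmul (gg N G vs l i) (Cmul (bb N G B vs l k) (uu N G vs k j)))))).
  2:{ intros k Hk. rewrite csum_conj. apply csum_ext; intros l Hl.
      unfold cc. rewrite !Cconj_mul, Cconj_cl.
      assert (Eb : Cconj (bb N G B vs k l) = bb N G B vs l k).
      { unfold bb. change (Cconj (ip N (mmul N G B) (vs k) (vs l)) = ip N (mmul N G B) (vs l) (vs k)).
        apply herm_ip_conj. apply (proj1 HGB). }
      rewrite Eb. unfold gg, uu. rewrite Cconj_conj.
      destruct (cl_cases lam k l) as [[E ->]|[E ->]].
      - rewrite cl_true by auto. cring.
      - rewrite cl_false by auto. cring. }
  rewrite csum_swap. reflexivity.
Qed.

Lemma final_psd : psd N (msub (LL N G B vs lam) (mscale (RtoC delta) G)).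
Proof.
  split.
  - intros i j Hi Hj. unfold msub, madj, mscale. rewrite (LL_herm i j Hi Hj).
    rewrite ((proj1 HG) i j Hi Hj). unfold madj. cring.
  - intros x. rewrite quad_msub. simpl. rewrite re_quad_mscale.
    rewrite LL_quad by auto.
    rewrite (decomp (mmul N G B) (bb N G B vs)) by (intros; reflexivity).
    assert (Hp : quad N G x = csum N (fun r => Cmul (fr lam r) (quad N G (yv x r)))).
    { rewrite (parseval N G HG vs Hon x). rewrite <- (decomp G (fun k l => kd k l)).
      2:{ intros k l Hk Hl. symmetry; apply Hon; auto. }
      apply csum_ext; intros k Hk.
      rewrite (csum_ext N _ (fun l => Cmul (kd k l) ((fun l => Cmul (cl lam k l) (Cmul (Cconj (xi N G vs x k)) (xi N G vs x l))) l))).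
      2:{ intros; cring. }
      rewrite csum_kd by auto. rewrite cl_true by auto. cring. }
    assert (Hqim : im (quad N G x) = 0) by (apply herm_quad_real, (proj1 HG)).
    rewrite Hqim. rewrite Hp at 1. rewrite !re_csum.
    assert (H : rsum N (fun r => delta * re (Cmul (fr lam r) (quad N G (yv x r)))) <=
                rsum N (fun r => re (Cmul (fr lam r) (quad N (mmul N G B) (yv x r))))).
    { apply rsum_le; intros r Hr. pose proof (per_r x r Hr).
      unfold fr. destruct (excluded_middle_informative (first lam r)); simpl; lra. }
    rewrite rsum_scal in H. lra.
Qed.

End Pos2.

Theorem lemma5p2 :
  forall (alpha beta CA CB : R), 0 < alpha -> 0 < beta ->
  exists delta : R, 0 < delta /\
  forall (N : nat) (G A B : Mat),
    hpd N G ->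
    meq N (mmul N G A) (mmul N (madj A) G) ->
    meq N (mmul N G B) (mmul N (madj B) G) ->
    psd N (mmul N G B) ->
    Gopnorm_le N G A CA ->
    Gopnorm_le N G B CB ->
    mge N (madd (mmul N G B)
                (mscale (RtoC (/ (alpha ^ 2)))
                        (mmul N (mmul N (mmul N (madj A) G) B) A)))
          (mscale (RtoC beta) G) ->
    exists L : Mat,
      time_average_is N (integrand N G A B) L /\
      mge N L (mscale (RtoC delta) G).
Proof.
  intros alpha beta CA CB Ha Hb. exists (delta CA alpha beta). split.
  { apply delta_pos; auto. }
  intros N G A B HG HA HB HGB HnA HnB Hhyp.
  destruct (basis_exists N G A CA HG HA HnA) as [vs [lam [Hon [Hev Hlam]]]].
  exists (LL N G B vs lam). split.
  - apply LL_avg; auto.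
  - apply (final_psd N G A B CA alpha beta); auto.
Qed.
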